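(* There is a universal constant $C$ such that for every positive integer $s$, every integer $k$ with $0<k<s/2$, and every $x\in\mathbb{R}$, $$|\Phi(y_k)-\Phi(y_k^* )|\le \frac{C}{\sqrt{s}}\big(1+t_k^2\big),$$ where $\Phi$ is the standard normal distribution function.
   Context: For a positive integer $s$, let $X_s$ be the size of an $(s,s+1)$-core with distinct parts chosen uniformly at random (a partition is an $s$-core if no cell of its Ferrers diagram has hook length $s$, where the hook length of a cell is the number of cells strictly to its right plus the number strictly above it plus one; an $(s,s+1)$-core is simultaneously an $s$-core and an $(s+1)$-core; the size is the sum of the parts). Let $\mu$ and $\sigma^2$ be the mean and variance of $X_s$. For integers $0<k<s/2$ put $\mu_k=\tfrac12 k(s+1-k)$ and $\sigma_k^2=\tfrac1{12}k(s+1-k)(s-2k)$ with $\sigma_k>0$, and for $x\in\mathbb{R}$ put $y_k=\frac{1}{\sigma_k}\big((\mu-\mu_k)+x\sigma\big)$. Let $c_0=(5-\sqrt5)/10$, $k_0=\lfloor c_0 s\rfloor$, $t_k=5^{3/4}(k-k_0)/\sqrt{s}$, $a=\sqrt{8/5}$, $b=-\sqrt{3/5}$, and $y_k^*=ax+bt_k$. *)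

(* Defs.v *)
From Stdlib Require Import Reals List Arith Lia Lra.
From Coquelicot Require Import Coquelicot.
Import ListNotations.
Open Scope R_scope.

(* A partition is a list of positive parts in weakly decreasing order
   [lam_0 >= lam_1 >= ...]; row i (0-based) of the Ferrers diagram has
   lam_i cells in columns 0 .. lam_i - 1. *)

Definition conj_part (lam : list nat) (j : nat) : nat :=
  length (filter (fun p => Nat.ltb j p) lam).

Definition hook (lam : list nat) (i j : nat) : nat :=
  (nth i lam 0%nat - j - 1) + (conj_part lam j - i - 1) + 1.

Definition has_hookb (lam : list nat) (h : nat) : bool :=
  existsb (fun i => existsb (fun j => Nat.eqb (hook lam i j) h)
                            (seq 0 (nth i lam 0%nat)))
          (seq 0 (length lam)).

Definition is_coreb (s : nat) (lam : list nat) : bool := negb (has_hookb lam s).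

Definition is_ss1_coreb (s : nat) (lam : list nat) : bool :=
  is_coreb s lam && is_coreb (S s) lam.

(** Partitions with distinct parts, all parts <= N: subsets of {1..N}
    listed in strictly decreasing order. *)
Fixpoint subsets (l : list nat) : list (list nat) :=
  match l with
  | [] => [[]]
  | x :: t => let r := subsets t in map (cons x) r ++ r
  end.

Definition distinct_partitions_le (N : nat) : list (list nat) :=
  subsets (rev (seq 1 N)).

(* Every part of an
   (s,s+1)-core is < s^2 (the largest hook length is at most the
   Frobenius number s(s+1)-s-(s+1) = s^2-s-1), so the bound N = s*s
   loses nothing. *)
Definition dcores (s : nat) : list (list nat) :=
  filter (is_ss1_coreb s) (distinct_partitions_le (s * s)).

Definition psize (lam : list nat) : R := INR (fold_right Nat.add 0%nat lam).

Definition sumR (l : list R) : R := fold_right Rplus 0 l.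

Definition mu (s : nat) : R :=
  sumR (map psize (dcores s)) / INR (length (dcores s)).

Definition sigma2 (s : nat) : R :=
  sumR (map (fun lam => (psize lam - mu s) ^ 2) (dcores s))
  / INR (length (dcores s)).

Definition sigma (s : nat) : R := sqrt (sigma2 s).

Definition Phi (y : R) : R :=
  / sqrt (2 * PI) *
  RInt_gen (fun t => exp (- t ^ 2 / 2)) (Rbar_locally m_infty) (at_point y).

Definition mu_k (s k : nat) : R := / 2 * INR k * (INR s + 1 - INR k).
Definition sigma_k2 (s k : nat) : R :=
  / 12 * INR k * (INR s + 1 - INR k) * (INR s - 2 * INR k).
Definition sigma_k (s k : nat) : R := sqrt (sigma_k2 s k).

Definition y_k (s k : nat) (x : R) : R :=
  / sigma_k s k * ((mu s - mu_k s k) + x * sigma s).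

Definition c0 : R := (5 - sqrt 5) / 10.
(* floor (c0 * s); Int_part is the floor function *)
Definition k0 (s : nat) : R := IZR (Int_part (c0 * INR s)).
Definition t_k (s k : nat) : R := Rpower 5 (3 / 4) * (INR k - k0 s) / sqrt (INR s).
Definition a_const : R := sqrt (8 / 5).
Definition b_const : R := - sqrt (3 / 5).
Definition y_k_star (s k : nat) (x : R) : R := a_const * x + b_const * t_k s k.

(* Main.v *)
Require Import Defs.
From Coquelicot Require Import Coquelicot.
From Stdlib Require Import Nsatz.
From Stdlib Require Import Reals List Arith Lia Lra Permutation.
Import ListNotations.

Fixpoint sdec (l : list nat) : Prop :=
  match l with
  | [] => True
  | x :: t => (match t with [] => (1 <= x)%nat | y :: _ => (y < x)%nat end) /\ sdec t
  end.

Lemma sdec_tail : forall x t, sdec (x :: t) -> sdec t.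
Proof. intros x t [_ H]; auto. Qed.

Lemma sdec_lt : forall t x, sdec (x :: t) -> Forall (fun y => (y < x)%nat) t.
Proof.
  induction t as [|y t IH]; intros x H; constructor.
  - destruct H as [H _]; auto.
  - destruct H as [Hyx Ht]. specialize (IH y Ht).
    eapply Forall_impl; [|exact IH]. intros; simpl in *; lia.
Qed.

Lemma sdec_pos : forall l, sdec l -> Forall (fun y => (1 <= y)%nat) l.
Proof.
  induction l as [|x t IH]; intros H; constructor.
  - destruct t as [|y t]. destruct H; auto. destruct H as [Hyx Ht].
    specialize (IH Ht). inversion IH; lia.
  - apply IH. eapply sdec_tail; eauto.
Qed.

Lemma sdec_cons : forall x t, sdec t -> (1 <= x)%nat -> Forall (fun y => (y < x)%nat) t -> sdec (x :: t).
Proof.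
  intros x t Ht Hx HF. simpl. split; auto. destruct t as [|y t]; auto. inversion HF; auto.
Qed.

Lemma rev_seq_S : forall N, rev (seq 1 (S N)) = S N :: rev (seq 1 N).
Proof. intros N. rewrite seq_S. rewrite rev_app_distr. simpl. reflexivity. Qed.

Lemma subsets_spec : forall N lam,
  In lam (subsets (rev (seq 1 N))) <-> sdec lam /\ Forall (fun y => (y <= N)%nat) lam.
Proof.
  induction N as [|N IH]; intros lam.
  - simpl. split.
    + intros [<-|[]]. split; simpl; auto.
    + intros [Hs HF]. destruct lam as [|x t]; auto.
      exfalso. pose proof (sdec_pos _ Hs) as HP. inversion HP; inversion HF; lia.
  - rewrite rev_seq_S. simpl. rewrite in_app_iff, in_map_iff.
    split.
    + intros [[l' [<- Hl']]|H].
      * apply IH in Hl'. destruct Hl' as [Hs HF]. split.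
        -- apply sdec_cons; auto. lia. eapply Forall_impl; [|exact HF]. intros; simpl in *; lia.
        -- constructor; auto. eapply Forall_impl; [|exact HF]. intros; simpl in *; lia.
      * apply IH in H. destruct H as [Hs HF]. split; auto.
        eapply Forall_impl; [|exact HF]. intros; simpl in *; lia.
    + intros [Hs HF]. destruct lam as [|x t].
      * right. apply IH. split; simpl; auto.
      * destruct (Nat.eq_dec x (S N)) as [->|Hne].
        -- left. exists t. split; auto. apply IH. split. eapply sdec_tail; eauto.
           pose proof (sdec_lt _ _ Hs). eapply Forall_impl; [|exact H]. intros; simpl in *; lia.
        -- right. apply IH. split; auto. inversion HF; subst.
           pose proof (sdec_lt _ _ Hs). constructor. lia.
           eapply Forall_impl; [|exact H]. intros; simpl in *; lia.
Qed.

Lemma subsets_incl : forall l lam, In lam (subsets l) -> incl lam l.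
Proof.
  induction l as [|x t IH]; intros lam H; simpl in H.
  - destruct H as [<-|[]]. intros a [].
  - rewrite in_app_iff, in_map_iff in H. destruct H as [[l' [<- Hl']]|H].
    + intros a [<-|Ha]. left; auto. right. eapply IH; eauto.
    + intros a Ha. right. eapply IH; eauto.
Qed.

Lemma subsets_nodup : forall l, NoDup l -> NoDup (subsets l).
Proof.
  induction l as [|x t IH]; intros Hnd; simpl.
  - constructor. intros []. constructor.
  - inversion Hnd; subst. apply NoDup_app.
    + apply FinFun.Injective_map_NoDup. intros a b Hab; inversion Hab; auto. auto.
    + auto.
    + intros a Ha Ha'. rewrite in_map_iff in Ha. destruct Ha as [l' [<- _]].
      apply subsets_incl in Ha'. apply H1. apply Ha'. left; auto.
Qed.

Definition goodc (s : nat) (lam : list nat) : Prop :=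
  match lam with [] => True | x :: _ => (x + length lam <= s)%nat end.

Lemma filter_split : forall (l : list nat) j,
  length (filter (fun q => Nat.ltb j q) l) =
  (length (filter (fun q => Nat.ltb (S j) q) l) + length (filter (fun q => Nat.eqb q (S j)) l))%nat.
Proof.
  induction l as [|x t IH]; intros j; simpl; auto.
  destruct (Nat.ltb_spec j x); destruct (Nat.ltb_spec (S j) x); destruct (Nat.eqb_spec x (S j));
  simpl; rewrite (IH j); lia.
Qed.

Lemma count_le1 : forall l v, sdec l -> (length (filter (fun q => Nat.eqb q v) l) <= 1)%nat.
Proof.
  induction l as [|x t IH]; intros v Hs; simpl; [lia|].
  destruct (Nat.eqb x v) eqn:E.
  - apply Nat.eqb_eq in E; subst. simpl.
    assert (length (filter (fun q => Nat.eqb q v) t) = 0)%nat.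
    { pose proof (sdec_lt _ _ Hs) as HF. clear -HF. induction t as [|y t IH]; simpl; auto.
      inversion HF; subst. destruct (Nat.eqb y v) eqn:E. apply Nat.eqb_eq in E; lia. auto. }
    lia.
  - apply IH. eapply sdec_tail; eauto.
Qed.

Lemma conj_all : forall l j, Forall (fun y => (j < y)%nat) l -> conj_part l j = length l.
Proof.
  intros l j H. unfold conj_part. induction l as [|x t IH]; simpl; auto.
  inversion H; subst. assert (Nat.ltb j x = true) by (apply Nat.ltb_lt; auto). rewrite H0. simpl. f_equal; auto.
Qed.

Lemma conj_none : forall l j, Forall (fun y => (y <= j)%nat) l -> conj_part l j = 0%nat.
Proof.
  intros l j H. unfold conj_part. induction l as [|x t IH]; simpl; auto.
  inversion H; subst. assert (Nat.ltb j x = false) by (apply Nat.ltb_ge; auto). rewrite H0. auto.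
Qed.

Lemma conj_le : forall l j, (conj_part l j <= length l)%nat.
Proof. intros; apply filter_length_le. Qed.

Lemma ivt_nat : forall s n (h : nat -> nat), (s <= h 0)%nat -> (h n <= S s)%nat ->
  (forall j, (j < n)%nat -> (h j <= h (S j) + 2)%nat) ->
  exists j, (j <= n)%nat /\ (h j = s \/ h j = S s).
Proof.
  intros s n. induction n as [|n IH]; intros h H0 Hn Hst.
  - exists 0%nat. split; [lia|]. lia.
  - destruct (le_lt_dec (h 0%nat) (S s)).
    + exists 0%nat. split; [lia|]. lia.
    + assert (H1 : (s <= h 1%nat)%nat) by (specialize (Hst 0%nat); lia).
      destruct (IH (fun j => h (S j)) H1 Hn) as [j [Hj Hh]].
      intros j Hj. apply Hst. lia.
      exists (S j). split; [lia|auto].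
Qed.

Lemma hook_bound : forall lam i j, sdec lam -> lam <> [] ->
  (hook lam i j <= hd 0%nat lam + length lam - 1)%nat.
Proof.
  intros lam i j Hs Hne. unfold hook.
  destruct lam as [|p t]; [congruence|]. simpl hd.
  assert (Hi : (nth i (p :: t) 0 <= p)%nat).
  { destruct (lt_dec i (length (p :: t))).
    - destruct i; simpl; auto. pose proof (sdec_lt _ _ Hs) as HF.
      rewrite Forall_forall in HF. simpl in l. assert (In (nth i t 0%nat) t) by (apply nth_In; lia).
      specialize (HF _ H). lia.
    - rewrite nth_overflow by lia. lia. }
  pose proof (conj_le (p :: t) j). pose proof (sdec_pos _ Hs) as HP. inversion HP; subst.
  simpl length in *. lia.
Qed.

Lemma core_iff : forall s lam, sdec lam -> (is_ss1_coreb s lam = true <-> goodc s lam).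
Proof.
  intros s lam Hs. unfold is_ss1_coreb, is_coreb. rewrite Bool.andb_true_iff, !Bool.negb_true_iff.
  destruct lam as [|p t] eqn:El.
  - simpl. tauto.
  - set (m := length (p :: t)).
    assert (Hp : (1 <= p)%nat) by (pose proof (sdec_pos _ Hs) as HP; inversion HP; auto).
    split.
    + intros [Hh1 Hh2]. simpl goodc. fold m.
      destruct (le_lt_dec (p + m) s) as [|Hlt]; auto. exfalso.
      set (h := fun j => hook (p :: t) 0 j).
      assert (Hconj0 : conj_part (p :: t) 0 = m).
      { apply conj_all. apply sdec_pos in Hs. eapply Forall_impl; [|exact Hs]. intros; simpl in *; lia. }
      assert (Hconjp : conj_part (p :: t) (p - 1) = 1%nat).
      { unfold conj_part. simpl. assert (Nat.ltb (p-1) p = true) by (apply Nat.ltb_lt; lia).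
        rewrite H. simpl. f_equal. pose proof (sdec_lt _ _ Hs) as HF. fold (conj_part t (p-1)).
        apply conj_none. eapply Forall_impl; [|exact HF]. intros; simpl in *; lia. }
      destruct (ivt_nat s (p - 1) h) as [j [Hj Hhj]].
      * unfold h, hook. simpl nth. rewrite Hconj0. lia.
      * unfold h, hook. simpl nth. rewrite Hconjp. lia.
      * intros j Hj. unfold h, hook. simpl nth.
        pose proof (filter_split (p :: t) j) as Hfs. fold (conj_part (p :: t) j) in Hfs.
        fold (conj_part (p :: t) (S j)) in Hfs.
        pose proof (count_le1 (p :: t) (S j) Hs).
        assert (1 <= conj_part (p :: t) (S j))%nat.
        { unfold conj_part. simpl. assert (Nat.ltb (S j) p = true) by (apply Nat.ltb_lt; lia). rewrite H0. simpl. lia. }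
        lia.
      * assert (Hex : forall v, h j = v -> has_hookb (p :: t) v = true).
        { intros v Hv. unfold has_hookb. apply existsb_exists. exists 0%nat. split.
          apply in_seq. simpl. lia. apply existsb_exists. exists j. split. apply in_seq. simpl nth. lia.
          apply Nat.eqb_eq. auto. }
        destruct Hhj as [Hv|Hv]; apply Hex in Hv; rewrite <- El in Hv; congruence.
    + intros Hg. simpl in Hg. fold m in Hg.
      assert (Hno : forall v, (p + m <= v)%nat -> has_hookb (p :: t) v = false).
      { intros v Hv. destruct (has_hookb (p :: t) v) eqn:E; auto. exfalso.
        unfold has_hookb in E. apply existsb_exists in E. destruct E as [i [_ E]].
        apply existsb_exists in E. destruct E as [j [_ E]]. apply Nat.eqb_eq in E.
        pose proof (hook_bound (p :: t) i j Hs ltac:(congruence)). simpl hd in H. unfold m in *. simpl length in *. lia. }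
      rewrite <- El. subst lam. split; apply Hno; unfold m in *; simpl length in *; lia.
Qed.

Lemma dcores_spec : forall s lam, In lam (dcores s) <-> sdec lam /\ goodc s lam.
Proof.
  intros s lam. unfold dcores, distinct_partitions_le. rewrite filter_In, subsets_spec.
  split.
  - intros [[Hs HF] Hc]. split; auto. apply core_iff; auto.
  - intros [Hs Hg]. split; [split; auto|]. 2: apply core_iff; auto.
    destruct lam as [|p t]; [constructor|]. simpl in Hg.
    pose proof (sdec_lt _ _ Hs) as HF. constructor. nia.
    eapply Forall_impl; [|exact HF]. intros; simpl in *; nia.
Qed.

Fixpoint Dl (s : nat) : list (list nat) :=
  match s with
  | O => [[]]
  | S s' => match s' with
            | O => [[]]
            | S s'' => map (map S) (Dl s') ++ map (fun l => map S l ++ [1%nat]) (Dl s'')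
            end
  end.

Lemma sdec_mapS : forall l, sdec l -> sdec (map S l).
Proof.
  induction l as [|x t IH]; intros H; simpl; auto.
  destruct H as [H1 H2]. split; auto. destruct t; simpl; lia.
Qed.

Lemma sdec_app1 : forall l, sdec l -> sdec (map S l ++ [1%nat]).
Proof.
  induction l as [|x t IH]; intros H; simpl; auto.
  destruct H as [H1 H2]. split; auto. destruct t; simpl; lia.
Qed.

Lemma sdec_app_inv : forall l a, sdec (l ++ [a]) -> sdec l /\ Forall (fun y => (a < y)%nat) l /\ (1 <= a)%nat.
Proof.
  induction l as [|x t IH]; intros a H.
  - simpl in H. destruct H; auto.
  - simpl in H. destruct H as [H1 H2]. destruct (IH a H2) as [Ht [HF Ha]].
    assert (Hax : (a < x)%nat) by (destruct t as [|y t']; simpl in H1; [lia|inversion HF; lia]).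
    split; [|split; auto].
    apply sdec_cons; auto. lia.
    destruct t as [|y t']. constructor. simpl in H1.
    pose proof (sdec_lt t' y Ht) as HF2. constructor. lia. eapply Forall_impl; [|exact HF2]. intros; simpl in *; lia.
Qed.

Lemma sdec_pred : forall l, sdec l -> Forall (fun y => (2 <= y)%nat) l -> sdec (map pred l).
Proof.
  induction l as [|x t IH]; intros H HF; simpl; auto.
  destruct H as [H1 H2]. inversion HF; subst. split; auto.
  destruct t as [|y t']; simpl in *; lia.
Qed.

Lemma map_S_pred : forall l, Forall (fun y => (1 <= y)%nat) l -> map S (map pred l) = l.
Proof.
  induction l as [|x t IH]; intros HF; simpl; auto. inversion HF; subst. f_equal; auto. lia.
Qed.

Lemma Dl_spec : forall s lam, In lam (Dl s) <-> sdec lam /\ goodc s lam.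
Proof.
  assert (H : forall n, (forall lam, In lam (Dl n) <-> sdec lam /\ goodc n lam) /\
                        (forall lam, In lam (Dl (S n)) <-> sdec lam /\ goodc (S n) lam)).
  { induction n as [|n [IH0 IH1]].
    - split; intros lam; simpl; split.
      + intros [<-|[]]. simpl; auto.
      + intros [Hs Hg]. destruct lam as [|p t]; auto. simpl in Hg. lia.
      + intros [<-|[]]. simpl; auto.
      + intros [Hs Hg]. destruct lam as [|p t]; auto. simpl in Hg. pose proof (sdec_pos _ Hs) as HP. inversion HP. lia.
    - split; [exact IH1|]. intros lam.
      change (Dl (S (S n))) with (map (map S) (Dl (S n)) ++ map (fun l => map S l ++ [1%nat]) (Dl n)).
      rewrite in_app_iff, !in_map_iff. split.
      + intros [[l' [<- Hl']]|[l' [<- Hl']]].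
        * apply IH1 in Hl'. destruct Hl' as [Hs Hg]. split. apply sdec_mapS; auto.
          destruct l' as [|p t]; simpl in *; auto. rewrite length_map. lia.
        * apply IH0 in Hl'. destruct Hl' as [Hs Hg]. split. apply sdec_app1; auto.
          destruct l' as [|p t]; simpl in *. lia. rewrite length_app, length_map. simpl. lia.
      + intros [Hs Hg]. destruct lam as [|p t] eqn:El.
        * left. exists []. split; auto. apply IH1. simpl; auto.
        * assert (Hne : lam <> []) by (subst; congruence). rewrite <- El in *.
          destruct (exists_last Hne) as [l1 [a Ha]].
          pose proof (sdec_pos _ Hs) as HP.
          destruct (Nat.eq_dec a 1) as [->|Ha1].
          -- right. exists (map pred l1). rewrite Ha in Hs. destruct (sdec_app_inv _ _ Hs) as [Hs1 [HF1 _]].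
             split. { rewrite map_S_pred. auto. eapply Forall_impl; [|exact HF1]. intros; simpl in *; lia. }
             apply IH0. split. { apply sdec_pred; [auto|]. eapply Forall_impl; [|exact HF1]. intros; simpl in *; lia. }
             assert (Hlen : length lam = S (length l1)) by (rewrite Ha, length_app; simpl; lia).
             destruct l1 as [|q u]; [simpl; auto|].
             assert (q = p) by (rewrite El in Ha; inversion Ha; auto). subst q.
             rewrite El in Hg. simpl in Hg. simpl. rewrite length_map. rewrite El in Hlen. simpl in Hlen. rewrite El in HP. inversion HP; subst. destruct p; [lia|]. simpl. lia.
          -- left. exists (map pred lam).
             assert (HF2 : Forall (fun y => (2 <= y)%nat) lam).
             { rewrite Ha in Hs. destruct (sdec_app_inv _ _ Hs) as [_ [HF1 Ha']].
               rewrite Ha. apply Forall_app. split. eapply Forall_impl; [|exact HF1]. intros; simpl in *; lia.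
               constructor; auto. lia. }
             split. apply map_S_pred; auto.
             apply IH1. split. apply sdec_pred; auto. rewrite El. simpl. rewrite length_map.
             rewrite El in Hg. simpl in Hg. rewrite El in HF2. inversion HF2; subst. destruct p; [lia|]. simpl. lia. }
  intros s lam. apply H.
Qed.

Lemma mapS_inj : forall a b : list nat, map S a = map S b -> a = b.
Proof.
  induction a as [|x t IH]; intros [|y u] H; simpl in H; try congruence.
  inversion H. f_equal; auto.
Qed.

Lemma Dl_nodup : forall s, NoDup (Dl s).
Proof.
  assert (H : forall n, NoDup (Dl n) /\ NoDup (Dl (S n))).
  { induction n as [|n [IH0 IH1]].
    - split; simpl; constructor; auto; constructor.
    - split; auto.
      change (Dl (S (S n))) with (map (map S) (Dl (S n)) ++ map (fun l => map S l ++ [1%nat]) (Dl n)).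
      apply NoDup_app.
      + apply FinFun.Injective_map_NoDup; auto. intros a b Hab. apply mapS_inj; auto.
      + apply FinFun.Injective_map_NoDup; auto. intros a b Hab. apply app_inj_tail in Hab. destruct Hab as [Hab _].
        apply mapS_inj; auto.
      + intros a Ha Ha'. rewrite in_map_iff in Ha, Ha'. destruct Ha as [l1 [<- H1]]. destruct Ha' as [l2 [E H2]].
        apply Dl_spec in H1. destruct H1 as [Hs _]. apply sdec_pos in Hs.
        assert (In 1%nat (map S l1)) by (rewrite <- E; apply in_or_app; right; left; auto).
        rewrite in_map_iff in H. destruct H as [x [Hx Hin]]. rewrite Forall_forall in Hs. specialize (Hs x Hin). lia. }
  intros s; apply H.
Qed.

Lemma dcores_perm : forall s, Permutation (dcores s) (Dl s).
Proof.
  intros s. apply NoDup_Permutation.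
  - unfold dcores. apply NoDup_filter. apply subsets_nodup. unfold distinct_partitions_le.
    apply NoDup_rev. apply seq_NoDup.
  - apply Dl_nodup.
  - intros x. rewrite dcores_spec, Dl_spec. tauto.
Qed.

Open Scope R_scope.

Lemma sumR_perm : forall (A : Type) (g : A -> R) (L1 L2 : list A), Permutation L1 L2 ->
  sumR (map g L1) = sumR (map g L2).
Proof.
  intros A g L1 L2 HP. induction HP; simpl; auto.
  - rewrite IHHP; auto.
  - ring.
  - congruence.
Qed.

Lemma mu_Dl : forall s, mu s = sumR (map psize (Dl s)) / INR (length (Dl s)).
Proof.
  intros s. unfold mu. rewrite (sumR_perm _ psize _ _ (dcores_perm s)).
  rewrite (Permutation_length (dcores_perm s)). reflexivity.
Qed.

Lemma sigma2_Dl : forall s, sigma2 s = sumR (map (fun lam => (psize lam - mu s) ^ 2) (Dl s)) / INR (length (Dl s)).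
Proof.
  intros s. unfold sigma2. rewrite (sumR_perm _ _ _ _ (dcores_perm s)).
  rewrite (Permutation_length (dcores_perm s)). reflexivity.
Qed.

Open Scope R_scope.

Fixpoint fib (n : nat) : nat :=
  match n with O => O | S m => match m with O => 1%nat | S k => (fib m + fib k)%nat end end.

Definition ml (l : list nat) : R := INR (length l).

Lemma sumR_app : forall (A : Type) (g : A -> R) L1 L2, sumR (map g (L1 ++ L2)) = sumR (map g L1) + sumR (map g L2).
Proof. intros. rewrite map_app. induction L1; simpl; [ring|]. rewrite IHL1. ring. Qed.

Lemma sumR_ext : forall (A : Type) (g h : A -> R) L, (forall x, g x = h x) -> sumR (map g L) = sumR (map h L).
Proof. intros. induction L; simpl; auto. rewrite H, IHL. auto. Qed.

Lemma sumR_lin : forall (L : list (list nat)) c1 c2 c3 c4 c5 c6,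
  sumR (map (fun l => c1 + c2 * ml l + c3 * ml l ^ 2 + c4 * psize l + c5 * psize l ^ 2 + c6 * (ml l * psize l)) L)
  = c1 * INR (length L) + c2 * sumR (map ml L) + c3 * sumR (map (fun l => ml l ^ 2) L)
    + c4 * sumR (map psize L) + c5 * sumR (map (fun l => psize l ^ 2) L) + c6 * sumR (map (fun l => ml l * psize l) L).
Proof.
  intros. induction L as [|a L IH]; unfold sumR in *; simpl in *; [ring|]. rewrite IH. rewrite ?S_INR. destruct (length L); simpl; ring.
Qed.

Lemma fold_S : forall l, fold_right Nat.add 0%nat (map S l) = (fold_right Nat.add 0%nat l + length l)%nat.
Proof. induction l as [|x t IH]; simpl; lia. Qed.

Lemma psize_S : forall l, psize (map S l) = psize l + ml l.
Proof. intros l. unfold psize, ml. rewrite fold_S, plus_INR. auto. Qed.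

Lemma fold_app1 : forall l, fold_right Nat.add 0%nat (l ++ [1%nat]) = (fold_right Nat.add 0%nat l + 1)%nat.
Proof. induction l as [|x t IH]; simpl; lia. Qed.

Lemma psize_app1 : forall l, psize (l ++ [1%nat]) = psize l + 1.
Proof. intros l. unfold psize. rewrite fold_app1, plus_INR. auto. Qed.

Lemma ml_S : forall l, ml (map S l) = ml l.
Proof. intros; unfold ml; rewrite length_map; auto. Qed.

Lemma ml_app1 : forall l, ml (map S l ++ [1%nat]) = ml l + 1.
Proof. intros; unfold ml; rewrite length_app, length_map, plus_INR; simpl; ring. Qed.

Definition SA s := INR (length (Dl s)).
Definition SM1 s := sumR (map ml (Dl s)).
Definition SM2 s := sumR (map (fun l => ml l ^ 2) (Dl s)).
Definition SZ1 s := sumR (map psize (Dl s)).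
Definition SZ2 s := sumR (map (fun l => psize l ^ 2) (Dl s)).
Definition SX s := sumR (map (fun l => ml l * psize l) (Dl s)).

Lemma Dl_SS : forall n (g : list nat -> R), sumR (map g (Dl (S (S n)))) =
  sumR (map (fun l => g (map S l)) (Dl (S n))) + sumR (map (fun l => g (map S l ++ [1%nat])) (Dl n)).
Proof.
  intros n g. change (Dl (S (S n))) with (map (map S) (Dl (S n)) ++ map (fun l => map S l ++ [1%nat]) (Dl n)).
  rewrite sumR_app, !map_map. auto.
Qed.

Lemma len_SS : forall n, INR (length (Dl (S (S n)))) = INR (length (Dl (S n))) + INR (length (Dl n)).
Proof.
  intros n. change (Dl (S (S n))) with (map (map S) (Dl (S n)) ++ map (fun l => map S l ++ [1%nat]) (Dl n)).
  rewrite length_app, !length_map, plus_INR. auto.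
Qed.

Ltac lin_rw L :=
  match goal with |- sumR (map ?g L) = _ => idtac end.

Definition cA (s : nat) : R := INR (fib (S s)).
Definition cM1 (s : nat) : R := let S := INR s in let a := INR (fib (Datatypes.S s)) in let b := INR (fib s) in
  (2/5 * S) * a + (-1/5 - S/5) * b.
Definition cM2 (s : nat) : R := let S := INR s in let a := INR (fib (Datatypes.S s)) in let b := INR (fib s) in
  (3/25 * S + 1/5 * S^2) * a + (1/25 - 4/25 * S - 1/5 * S^2) * b.
Definition cZ1 (s : nat) : R := let S := INR s in let a := INR (fib (Datatypes.S s)) in let b := INR (fib s) in
  (7/50 * S + 1/10 * S^2) * a + (-3/25 - 3/25 * S) * b.
Definition cZ2 (s : nat) : R := let S := INR s in let a := INR (fib (Datatypes.S s)) in let b := INR (fib s) in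
  (13/375 * S + 1/20 * S^2 + 1/30 * S^3 + 1/100 * S^4) * a + (-3/125 - 19/375 * S - 1/25 * S^2 - 1/75 * S^3) * b.
Definition cX (s : nat) : R := let S := INR s in let a := INR (fib (Datatypes.S s)) in let b := INR (fib s) in
  (1/10 * S + 1/10 * S^2 + 1/25 * S^3) * a + (-1/10 * S - 3/25 * S^2 - 1/50 * S^3) * b.

Definition Pst (s : nat) : Prop :=
  SA s = cA s /\ SM1 s = cM1 s /\ SM2 s = cM2 s /\ SZ1 s = cZ1 s /\ SZ2 s = cZ2 s /\ SX s = cX s.

Lemma Pst_all : forall s, Pst s.
Proof.
  assert (H : forall n, Pst n /\ Pst (S n)).
  { induction n as [|n [IH0 IH1]].
    - split; unfold Pst, SA, SM1, SM2, SZ1, SZ2, SX, cA, cM1, cM2, cZ1, cZ2, cX; simpl;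
      unfold ml, psize; simpl; repeat split; field.
    - split; auto.
      destruct IH0 as [A0 [M10 [M20 [Z10 [Z20 X0]]]]].
      destruct IH1 as [A1 [M11 [M21 [Z11 [Z21 X1]]]]].
      assert (Hf : INR (fib (S (S (S n)))) = INR (fib (S (S n))) + INR (fib (S n))).
      { change (fib (S (S (S n)))) with (fib (S (S n)) + fib (S n))%nat. apply plus_INR. }
      assert (Hf2 : INR (fib (S (S n))) = INR (fib (S n)) + INR (fib n)).
      { change (fib (S (S n))) with (fib (S n) + fib n)%nat. apply plus_INR. }
      unfold Pst, SA, SM1, SM2, SZ1, SZ2, SX.
      rewrite len_SS, !Dl_SS.
      repeat split.
      + fold (SA (S n)) (SA n). rewrite A0, A1. unfold cA. rewrite Hf. ring.
      + rewrite (sumR_ext _ _ (fun l => 0 + 1 * ml l + 0 * ml l ^ 2 + 0 * psize l + 0 * psize l ^ 2 + 0 * (ml l * psize l)))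
          by (intros; rewrite ml_S; ring).
        rewrite (sumR_ext _ (fun l => ml (map S l ++ [1%nat])) (fun l => 1 + 1 * ml l + 0 * ml l ^ 2 + 0 * psize l + 0 * psize l ^ 2 + 0 * (ml l * psize l)))
          by (intros; rewrite ml_app1; ring).
        rewrite !sumR_lin. fold (SA (S n)) (SA n) (SM1 (S n)) (SM1 n) (SM2 (S n)) (SM2 n) (SZ1 (S n)) (SZ1 n) (SZ2 (S n)) (SZ2 n) (SX (S n)) (SX n).
        rewrite A0, A1, M10, M11, M20, M21, Z10, Z11, Z20, Z21, X0, X1.
        unfold cA, cM1, cM2, cZ1, cZ2, cX. cbv zeta. rewrite Hf, Hf2. rewrite !S_INR. field.
      + rewrite (sumR_ext _ _ (fun l => 0 + 0 * ml l + 1 * ml l ^ 2 + 0 * psize l + 0 * psize l ^ 2 + 0 * (ml l * psize l)))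
          by (intros; rewrite ml_S; ring).
        rewrite (sumR_ext _ (fun l => ml (map S l ++ [1%nat]) ^ 2) (fun l => 1 + 2 * ml l + 1 * ml l ^ 2 + 0 * psize l + 0 * psize l ^ 2 + 0 * (ml l * psize l)))
          by (intros; rewrite ml_app1; ring).
        rewrite !sumR_lin. fold (SA (S n)) (SA n) (SM1 (S n)) (SM1 n) (SM2 (S n)) (SM2 n) (SZ1 (S n)) (SZ1 n) (SZ2 (S n)) (SZ2 n) (SX (S n)) (SX n).
        rewrite A0, A1, M10, M11, M20, M21, Z10, Z11, Z20, Z21, X0, X1.
        unfold cA, cM1, cM2, cZ1, cZ2, cX. cbv zeta. rewrite Hf, Hf2. rewrite !S_INR. field.
      + rewrite (sumR_ext _ _ (fun l => 0 + 1 * ml l + 0 * ml l ^ 2 + 1 * psize l + 0 * psize l ^ 2 + 0 * (ml l * psize l)))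
          by (intros; rewrite psize_S; ring).
        rewrite (sumR_ext _ (fun l => psize (map S l ++ [1%nat])) (fun l => 1 + 1 * ml l + 0 * ml l ^ 2 + 1 * psize l + 0 * psize l ^ 2 + 0 * (ml l * psize l)))
          by (intros; rewrite psize_app1, psize_S; ring).
        rewrite !sumR_lin. fold (SA (S n)) (SA n) (SM1 (S n)) (SM1 n) (SM2 (S n)) (SM2 n) (SZ1 (S n)) (SZ1 n) (SZ2 (S n)) (SZ2 n) (SX (S n)) (SX n).
        rewrite A0, A1, M10, M11, M20, M21, Z10, Z11, Z20, Z21, X0, X1.
        unfold cA, cM1, cM2, cZ1, cZ2, cX. cbv zeta. rewrite Hf, Hf2. rewrite !S_INR. field.
      + rewrite (sumR_ext _ _ (fun l => 0 + 0 * ml l + 1 * ml l ^ 2 + 0 * psize l + 1 * psize l ^ 2 + 2 * (ml l * psize l)))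
          by (intros; rewrite psize_S; ring).
        rewrite (sumR_ext _ (fun l => psize (map S l ++ [1%nat]) ^ 2) (fun l => 1 + 2 * ml l + 1 * ml l ^ 2 + 2 * psize l + 1 * psize l ^ 2 + 2 * (ml l * psize l)))
          by (intros; rewrite psize_app1, psize_S; ring).
        rewrite !sumR_lin. fold (SA (S n)) (SA n) (SM1 (S n)) (SM1 n) (SM2 (S n)) (SM2 n) (SZ1 (S n)) (SZ1 n) (SZ2 (S n)) (SZ2 n) (SX (S n)) (SX n).
        rewrite A0, A1, M10, M11, M20, M21, Z10, Z11, Z20, Z21, X0, X1.
        unfold cA, cM1, cM2, cZ1, cZ2, cX. cbv zeta. rewrite Hf, Hf2. rewrite !S_INR. field.
      + rewrite (sumR_ext _ _ (fun l => 0 + 0 * ml l + 1 * ml l ^ 2 + 0 * psize l + 0 * psize l ^ 2 + 1 * (ml l * psize l)))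
          by (intros; rewrite psize_S, ml_S; ring).
        rewrite (sumR_ext _ (fun l => ml (map S l ++ [1%nat]) * psize (map S l ++ [1%nat])) (fun l => 1 + 2 * ml l + 1 * ml l ^ 2 + 1 * psize l + 0 * psize l ^ 2 + 1 * (ml l * psize l)))
          by (intros; rewrite ml_app1, psize_app1, psize_S; ring).
        rewrite !sumR_lin. fold (SA (S n)) (SA n) (SM1 (S n)) (SM1 n) (SM2 (S n)) (SM2 n) (SZ1 (S n)) (SZ1 n) (SZ2 (S n)) (SZ2 n) (SX (S n)) (SX n).
        rewrite A0, A1, M10, M11, M20, M21, Z10, Z11, Z20, Z21, X0, X1.
        unfold cA, cM1, cM2, cZ1, cZ2, cX. cbv zeta. rewrite Hf, Hf2. rewrite !S_INR. field. }
  intros s; apply H.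
Qed.

Open Scope R_scope.

Definition gf (t : R) : R := exp (- t ^ 2 / 2).

Lemma exp_le' : forall x y, x <= y -> exp x <= exp y.
Proof. intros x y H; destruct (Req_dec x y) as [->|]; [lra|]. left; apply exp_increasing; lra. Qed.

Lemma gf_cont : forall t, continuous gf t.
Proof.
  intro t. unfold gf.
  apply (ex_derive_continuous (fun t => exp (- t ^ 2 / 2))). auto_derive. auto.
Qed.

Lemma gf_ex : forall a b, ex_RInt gf a b.
Proof. intros. apply (@ex_RInt_continuous R_CompleteNormedModule). intros; apply gf_cont. Qed.

Lemma gf_pos : forall t, 0 < gf t.
Proof. intros; unfold gf; apply exp_pos. Qed.

Lemma gf_le1 : forall t, gf t <= 1.
Proof.
  intros; unfold gf. rewrite <- exp_0. apply exp_le'. nra.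
Qed.

Lemma gf_abs : forall y, Rabs y * gf y <= 1.
Proof.
  intros y. unfold gf.
  assert (H := exp_ineq1_le (y ^ 2 / 2)).
  assert (Hp := exp_pos (y ^ 2 / 2)).
  assert (E : exp (- y ^ 2 / 2) = / exp (y ^ 2 / 2)).
  { rewrite <- exp_Ropp. f_equal. field. }
  rewrite E.
  assert (Rabs y <= 1 + y ^ 2 / 2).
  { destruct (Rabs_pos y). assert (Rabs y ^ 2 = y ^ 2) by (simpl; rewrite !Rmult_1_r; rewrite <- Rabs_mult; apply Rabs_pos_eq; nra). nra. nra. }
  apply (Rmult_le_reg_r (exp (y ^ 2 / 2))); auto.
  rewrite Rmult_assoc, Rinv_l by lra. lra.
Qed.

Definition Hh (t : R) : R := - 4 * exp (/2) / (1 + exp t).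
Definition hh (t : R) : R := 4 * exp (/2) * exp t / (1 + exp t) ^ 2.

Lemma Hh_deriv : forall t, is_derive Hh t (hh t).
Proof.
  intros t. unfold Hh, hh. auto_derive.
  - assert (0 < exp t) by apply exp_pos. lra.
  - assert (0 < exp t) by apply exp_pos. field. lra.
Qed.

Lemma hh_cont : forall t, continuous hh t.
Proof.
  intros t. unfold hh. apply (ex_derive_continuous (fun t => 4 * exp (/2) * exp t / (1 + exp t) ^ 2)).
  auto_derive. assert (0 < exp t) by apply exp_pos. nra.
Qed.

Lemma le_div_r : forall a b d, 0 < d -> a * d <= b -> a <= b / d.
Proof. intros a b d Hd H. unfold Rdiv. apply (Rmult_le_reg_r d); auto.
  rewrite Rmult_assoc, Rinv_l by lra. lra. Qed.

Lemma aux1 : forall u, 1 <= u -> / u <= 4 * u / (1+u)^2.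
Proof. intros u Hu. apply le_div_r. nra.
  replace (/ u * (1 + u) ^ 2) with ((1+u)^2 / u) by (field; lra).
  apply (Rmult_le_reg_r u). lra. unfold Rdiv. rewrite Rmult_assoc, Rinv_l by lra. nra. Qed.

Lemma aux2 : forall u, 0 < u -> u <= 1 -> u <= 4 * u / (1+u)^2.
Proof. intros u Hu Hu1. apply le_div_r. nra. nra. Qed.

Lemma gf_le_hh : forall t, gf t <= hh t.
Proof.
  intros t. unfold gf, hh.
  assert (Ht := exp_pos t).
  assert (Hq : exp (- t ^ 2 / 2) <= exp (/2) * exp (- Rabs t)).
  { rewrite <- exp_plus. apply exp_le'. 
    assert (Rabs t ^ 2 = t ^ 2) by (simpl; rewrite !Rmult_1_r; rewrite <- Rabs_mult; apply Rabs_pos_eq; nra).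
    pose proof (pow2_ge_0 (Rabs t - 1)). nra. }
  eapply Rle_trans; [apply Hq|].
  assert (He := exp_pos (/2)).
  replace (4 * exp (/ 2) * exp t / (1 + exp t) ^ 2) with (exp (/2) * (4 * exp t / (1 + exp t) ^ 2)) by (field; lra).
  apply Rmult_le_compat_l; [lra|].
  destruct (Rle_dec 0 t).
  - rewrite Rabs_right by lra. rewrite exp_Ropp.
    apply aux1. rewrite <- exp_0; apply exp_le'; lra.
  - rewrite Rabs_left by lra. rewrite Ropp_involutive.
    apply aux2; auto. rewrite <- exp_0; apply exp_le'; lra.
Qed.

Lemma RInt_hh : forall a b, RInt hh a b = Hh b - Hh a.
Proof.
  intros. apply is_RInt_unique.
  apply (@is_RInt_derive R_CompleteNormedModule Hh hh). intros; apply Hh_deriv. intros; apply hh_cont.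
Qed.

Definition M0 : R := 4 * exp (/2).

Lemma Hh_range : forall t, - M0 < Hh t < 0.
Proof.
  intros t. unfold Hh, M0. assert (Ht := exp_pos t). assert (He := exp_pos (/2)).
  split.
  - unfold Rdiv. apply (Rmult_lt_reg_r (1 + exp t)). lra.
    rewrite Rmult_assoc, Rinv_l by lra. nra.
  - unfold Rdiv. assert (0 < / (1 + exp t)) by (apply Rinv_0_lt_compat; lra). nra.
Qed.

Lemma RInt_gf_bound : forall a b, a <= b -> 0 <= RInt gf a b <= M0.
Proof.
  intros a b Hab. split.
  - apply RInt_ge_0; auto. apply gf_ex. intros; left; apply gf_pos.
  - apply Rle_trans with (RInt hh a b).
    + apply RInt_le; auto. apply gf_ex. apply (@ex_RInt_continuous R_CompleteNormedModule); intros; apply hh_cont.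
      intros; apply gf_le_hh.
    + rewrite RInt_hh. pose proof (Hh_range a); pose proof (Hh_range b). lra.
Qed.

Lemma gf_gen : forall y, exists l,
  is_RInt_gen gf (Rbar_locally m_infty) (at_point y) l /\ 0 <= l <= M0.
Proof.
  intros y.
  set (E := fun v => exists a, a <= y /\ v = RInt gf a y).
  assert (HB : bound E).
  { exists M0. intros v [a [Ha ->]]. apply RInt_gf_bound; auto. }
  assert (HE : exists v, E v). { exists (RInt gf y y). exists y; split; [lra|auto]. }
  destruct (completeness E HB HE) as [l [Hub Hlub]].
  assert (Hl0 : 0 <= l).
  { apply Rle_trans with (RInt gf y y). rewrite RInt_point. unfold Hierarchy.zero; simpl; lra.
    apply Hub. exists y; split; [lra|auto]. }
  assert (HlM : l <= M0).
  { apply Hlub. intros v [a [Ha ->]]. apply RInt_gf_bound; auto. }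
  exists l. split; [|lra].
  unfold is_RInt_gen, filterlimi, filter_le, filtermapi.
  intros P [eps Heps].
  assert (Hex : exists a0, a0 <= y /\ l - eps < RInt gf a0 y).
  { destruct (Classical_Prop.classic (exists a0, a0 <= y /\ l - eps < RInt gf a0 y)) as [H|H]; auto.
    exfalso. assert (l <= l - eps). apply Hlub. intros v [a [Ha ->]].
    destruct (Rle_dec (RInt gf a y) (l - eps)); auto. exfalso; apply H. exists a; split; auto; lra.
    destruct eps; simpl in *; lra. }
  destruct Hex as [a0 [Ha0 Hv]].
  apply Filter_prod with (Q := fun a => a < a0) (R := fun b => b = y).
  - exists a0. auto.
  - reflexivity.
  - intros a b Ha Hb; simpl in Hb; subst b. simpl.
    exists (RInt gf a y). split. apply (@RInt_correct R_CompleteNormedModule). apply gf_ex.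
    apply Heps.
    assert (Hin : RInt gf a y <= l). { apply Hub. exists a; split; auto; lra. }
    assert (Hch : RInt gf a y = RInt gf a a0 + RInt gf a0 y).
    { symmetry. apply (@RInt_Chasles R_CompleteNormedModule); apply gf_ex. }
    assert (0 <= RInt gf a a0) by (apply RInt_gf_bound; lra).
    change (Rabs (RInt gf a y - l) < eps).
    rewrite Rabs_left1 by lra. lra.
Qed.

Lemma sqrt2pi_ge2 : 2 <= sqrt (2 * PI).
Proof.
  pose proof PI2_1. assert (H4: sqrt (2*2) = 2) by (apply sqrt_square; lra). rewrite <- H4 at 1. apply sqrt_le_1_alt. lra.
Qed.

Lemma Phi_char : forall y l, is_RInt_gen gf (Rbar_locally m_infty) (at_point y) l ->
  Phi y = / sqrt (2 * PI) * l.
Proof.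
  intros y l H. unfold Phi. f_equal. apply (is_RInt_gen_unique (V:=R_CompleteNormedModule)); auto.
Qed.

Lemma Phi_range : forall y, 0 <= Phi y <= 4.
Proof.
  intros y. destruct (gf_gen y) as [l [Hl Hb]]. rewrite (Phi_char y l Hl).
  pose proof sqrt2pi_ge2.
  assert (Hs : 0 < / sqrt (2 * PI)) by (apply Rinv_0_lt_compat; lra).
  assert (He : exp (/2) * exp (/2) <= 3).
  { rewrite <- exp_plus. replace (/2 + /2) with 1 by field. apply exp_le_3. }
  assert (He0 := exp_pos (/2)).
  assert (exp (/2) <= 7/4) by nra.
  unfold M0 in Hb.
  assert (/ sqrt (2 * PI) <= /2) by (apply Rinv_le_contravar; lra).
  split. nra. nra.
Qed.

Lemma Phi_diff : forall u v, Phi v - Phi u = / sqrt (2 * PI) * RInt gf u v.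
Proof.
  intros u v. destruct (gf_gen u) as [l [Hl _]].
  assert (H2 : is_RInt_gen gf (at_point u) (at_point v) (RInt gf u v)).
  { apply is_RInt_gen_at_point. apply (@RInt_correct R_CompleteNormedModule). apply gf_ex. }
  pose proof (is_RInt_gen_Chasles (V:=R_NormedModule) gf u l (RInt gf u v) Hl H2) as H3.
  rewrite (Phi_char v _ H3), (Phi_char u _ Hl). change (plus l (RInt gf u v)) with (l + RInt gf u v). ring.
Qed.

Lemma RInt_gf_abs : forall a b M, (forall y, Rmin a b <= y <= Rmax a b -> gf y <= M) ->
  Rabs (RInt gf a b) <= Rabs (b - a) * M.
Proof.
  intros a b M H.
  apply (norm_RInt_le_const_abs (V:=R_NormedModule) gf a b).
  - intros x Hx. change (Rabs (gf x) <= M). rewrite Rabs_pos_eq by (left; apply gf_pos). auto.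
  - apply (@RInt_correct R_CompleteNormedModule). apply gf_ex.
Qed.

Lemma Phi_lip : forall u v, Rabs (Phi u - Phi v) <= Rabs (u - v) / 2.
Proof.
  intros u v. rewrite Phi_diff. rewrite Rabs_mult.
  pose proof sqrt2pi_ge2.
  rewrite Rabs_pos_eq by (left; apply Rinv_0_lt_compat; lra).
  assert (/ sqrt (2 * PI) <= /2) by (apply Rinv_le_contravar; lra).
  assert (H1 : Rabs (RInt gf v u) <= Rabs (u - v) * 1) by (apply RInt_gf_abs; intros; apply gf_le1).
  assert (0 <= Rabs (RInt gf v u)) by apply Rabs_pos.
  assert (0 < / sqrt (2 * PI)) by (apply Rinv_0_lt_compat; lra).
  nra.
Qed.

Lemma Phi_diff4 : forall u v, Rabs (Phi u - Phi v) <= 4.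
Proof.
  intros u v. pose proof (Phi_range u); pose proof (Phi_range v).
  apply Rabs_le; lra.
Qed.

Lemma Phi_abs_RInt : forall u v, Rabs (Phi u - Phi v) <= Rabs (RInt gf v u).
Proof.
  intros u v. rewrite Phi_diff. rewrite Rabs_mult.
  pose proof sqrt2pi_ge2.
  rewrite Rabs_pos_eq by (left; apply Rinv_0_lt_compat; lra).
  assert (/ sqrt (2 * PI) <= /2) by (apply Rinv_le_contravar; lra).
  assert (0 <= Rabs (RInt gf v u)) by apply Rabs_pos.
  assert (0 < / sqrt (2 * PI)) by (apply Rinv_0_lt_compat; lra).
  nra.
Qed.

Lemma PhiX : forall c x l1 l2, 0 < l1 -> 0 < l2 ->
  Rabs (Phi (c + l1 * x) - Phi (c + l2 * x)) <= Rabs (l1 - l2) * (1 + Rabs c) / Rmin l1 l2.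
Proof.
  intros c x l1 l2 H1 H2.
  set (m := Rmin l1 l2).
  assert (Hm : 0 < m) by (unfold m; apply Rmin_glb_lt; auto).
  assert (Hm1 : m <= l1) by apply Rmin_l. assert (Hm2 : m <= l2) by apply Rmin_r.
  eapply Rle_trans; [apply Phi_abs_RInt|].
  destruct (Req_dec x 0) as [Hx|Hx].
  - subst x. rewrite !Rmult_0_r. rewrite RInt_point. unfold Hierarchy.zero; simpl. rewrite Rabs_R0.
    apply Rmult_le_pos. apply Rmult_le_pos. apply Rabs_pos. pose proof (Rabs_pos c); lra.
    left; apply Rinv_0_lt_compat; auto.
  - assert (Hax : 0 < Rabs x) by (apply Rabs_pos_lt; auto).
    set (M := (1 + Rabs c) / (m * Rabs x)).
    assert (HM : forall y, Rmin (c + l2 * x) (c + l1 * x) <= y <= Rmax (c + l2 * x) (c + l1 * x) -> gf y <= M).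
    { intros y Hy.
      assert (Hyc : m * Rabs x <= Rabs (y - c)).
      { destruct (Rle_dec 0 x).
        - assert (c + m * x <= Rmin (c + l2 * x) (c + l1 * x)) by (apply Rmin_glb; nra).
          rewrite Rabs_pos_eq by lra. rewrite Rabs_pos_eq by nra. nra.
        - assert (Rmax (c + l2 * x) (c + l1 * x) <= c + m * x) by (apply Rmax_lub; nra).
          rewrite Rabs_left by lra. rewrite Rabs_left1 by nra. nra. }
      assert (Hg := gf_abs y). assert (Hg1 := gf_le1 y). assert (Hg0 := gf_pos y).
      assert (Rabs (y - c) <= Rabs y + Rabs c).
      { unfold Rminus. eapply Rle_trans. apply Rabs_triang. rewrite Rabs_Ropp. lra. }
      unfold M. apply le_div_r. nra.
      assert (0 <= Rabs c) by apply Rabs_pos. nra. }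
    eapply Rle_trans. apply RInt_gf_abs. apply HM.
    replace (c + l1 * x - (c + l2 * x)) with ((l1 - l2) * x) by ring.
    rewrite Rabs_mult. unfold M. right. field. split; lra.
Qed.

Open Scope R_scope.

Definition r5 : R := sqrt 5.
Definition s0sq : R := / (60 * r5).
Definition s0 : R := sqrt s0sq.
Definition kap : R := / (2 * r5 * s0).
Definition qq : R := Rpower 5 (3/4).

Lemma r5_sq : r5 * r5 = 5.
Proof. unfold r5. apply sqrt_sqrt. lra. Qed.
Lemma r5_pos : 0 < r5.
Proof. unfold r5. apply sqrt_lt_R0. lra. Qed.
Lemma r5_bounds : 2.236 < r5 < 2.2361.
Proof. pose proof r5_sq; pose proof r5_pos. split; nra. Qed.
Lemma c0_def : 10 * c0 = 5 - r5.
Proof. unfold c0, r5. field. Qed.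
Lemma s0sq_def : s0sq * (60 * r5) = 1.
Proof. unfold s0sq. pose proof r5_pos. field. lra. Qed.
Lemma s0sq_bounds : 0.0074 < s0sq < 0.0075.
Proof. pose proof s0sq_def; pose proof r5_bounds. split; nra. Qed.
Lemma s0_sq : s0 * s0 = s0sq.
Proof. unfold s0. apply sqrt_sqrt. pose proof s0sq_bounds; lra. Qed.
Lemma s0_bounds : 0.086 < s0 < 0.0867.
Proof. pose proof s0_sq; pose proof s0sq_bounds. assert (0 <= s0) by (unfold s0; apply sqrt_pos). split; nra. Qed.
Lemma kap_def : kap * (2 * r5 * s0) = 1.
Proof. unfold kap. pose proof r5_pos; pose proof s0_bounds. field. split; lra. Qed.
Lemma kap_bounds : 2.57 < kap < 2.61.
Proof. pose proof kap_def; pose proof r5_bounds; pose proof s0_bounds.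
  assert (0.384 < 2 * r5 * s0 < 0.388) by (split; nra).
  set (m := 2 * r5 * s0) in *. split; nra. Qed.
Lemma kap_sq : kap * kap = 3 * r5.
Proof.
  pose proof kap_def as H. pose proof s0_sq as H0. pose proof s0sq_def as H1. pose proof r5_sq as H2.
  assert (H3 : kap * kap * s0sq * 20 = 1).
  { rewrite <- H0. replace 20 with (4 * (r5 * r5)) by (rewrite H2; ring).
    replace (kap * kap * (s0 * s0) * (4 * (r5 * r5))) with ((kap * (2 * r5 * s0)) * (kap * (2 * r5 * s0))) by ring.
    rewrite H. ring. }
  replace (kap * kap) with (kap * kap * (s0sq * (60 * r5))) by (rewrite H1; ring).
  replace (kap * kap * (s0sq * (60 * r5))) with ((kap * kap * s0sq * 20) * (3 * r5)) by ring.
  rewrite H3. ring.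
Qed.

Lemma qq_sq : qq * qq = 5 * r5.
Proof.
  unfold qq, r5. rewrite <- Rpower_plus. replace (3/4 + 3/4) with (1 + /2) by field.
  rewrite Rpower_plus, Rpower_1, Rpower_sqrt by lra. auto.
Qed.

Lemma qq_pos : 0 < qq.
Proof. unfold qq, Rpower. apply exp_pos. Qed.

Lemma sqrt35_qq : sqrt (3/5) * qq = kap.
Proof.
  pose proof kap_bounds. pose proof qq_pos. pose proof kap_sq. pose proof qq_sq. pose proof r5_pos.
  assert (Hs : sqrt (3/5) * sqrt (3/5) = 3/5) by (apply sqrt_sqrt; lra).
  assert (Hp : 0 <= sqrt (3/5)) by apply sqrt_pos.
  assert (E : (sqrt (3/5) * qq) * (sqrt (3/5) * qq) = kap * kap).
  { replace ((sqrt (3/5) * qq) * (sqrt (3/5) * qq)) with ((sqrt (3/5) * sqrt (3/5)) * (qq * qq)) by ring.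
    rewrite Hs, H2, H1. field. }
  assert (0 <= sqrt (3/5) * qq) by nra.
  nra.
Qed.

Lemma qq_bounds : 3.34 < qq < 3.35.
Proof. pose proof qq_sq; pose proof qq_pos; pose proof r5_bounds. split; nra. Qed.

Lemma a_sq : a_const * a_const = 8/5.
Proof. unfold a_const. apply sqrt_sqrt. lra. Qed.
Lemma a_bounds : 1.264 < a_const < 1.2650.
Proof. pose proof a_sq. assert (0 <= a_const) by (unfold a_const; apply sqrt_pos). split; nra. Qed.

Lemma E3_id : forall S K u, u = K - c0 * S ->
  60 * (K * (S + 1 - K) * (S - 2 * K) - 12 * s0sq * S * S * S) =
  12 * c0 * r5 * S * S - 12 * u * S * S + 12 * u * S * r5 - 36 * u * u * S * r5
  - 120 * c0 * u * S - 120 * u * u + 120 * u * u * u.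
Proof.
  intros S K u Hu. pose proof r5_sq as H1. pose proof c0_def as H2. pose proof s0sq_def as H3.
  assert (HK : K = c0 * S + u) by lra. subst K. clear Hu.
  generalize dependent c0. intros c0 H2. generalize dependent s0sq. intros s H3. generalize dependent r5. intros r H1 H2 H3.
  nsatz.
Qed.

Lemma absb : forall T b, Rabs T <= b -> -b <= T <= b.
Proof. intros T b H. unfold Rabs in H. destruct (Rcase_abs T); lra. Qed.

Lemma abs_uw : forall u w, 0 <= w -> Rabs (u * w) = Rabs u * w.
Proof. intros. rewrite Rabs_mult, (Rabs_pos_eq w); auto. Qed.

Lemma c0_bounds : 0.2763 < c0 < 0.2765.
Proof. pose proof c0_def; pose proof r5_bounds. split; lra. Qed.

Lemma E3_bound : forall S K u, u = K - c0 * S -> 1 <= S -> Rabs u <= S / 10000 ->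
  Rabs (/12 * K * (S + 1 - K) * (S - 2 * K) - s0sq * S * S * S) <= (1 + Rabs u) * S * S / 8.
Proof.
  intros S K u Hu HS Hua.
  pose proof (E3_id S K u Hu) as HE.
  set (E := /12 * K * (S + 1 - K) * (S - 2 * K) - s0sq * S * S * S).
  assert (HE' : 720 * E = 12 * c0 * r5 * S * S - 12 * u * S * S + 12 * u * S * r5 - 36 * u * u * S * r5
     - 120 * c0 * u * S - 120 * u * u + 120 * u * u * u).
  { rewrite <- HE. unfold E. field. }
  set (a := Rabs u) in *.
  assert (Ha : 0 <= a) by apply Rabs_pos.
  pose proof c0_bounds; pose proof r5_bounds.
  assert (Hcr : 0 <= c0 * r5 <= 0.62) by (split; nra).
  assert (HSS : 1 <= S * S) by nra.
  assert (T1 : 0 <= 12 * c0 * r5 * S * S <= 7.5 * S * S).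
  { replace (12 * c0 * r5 * S * S) with (12 * (c0 * r5) * (S * S)) by ring. split; nra. }
  assert (T2 : -12 * a * S * S <= - 12 * u * S * S <= 12 * a * S * S).
  { assert (Rabs (u * (12 * S * S)) <= a * (12 * S * S)) by (rewrite abs_uw by nra; unfold a; lra).
    apply absb in H1. split; nra. }
  assert (T3 : -27 * a * S * S <= 12 * u * S * r5 <= 27 * a * S * S).
  { assert (Rabs (u * (12 * S * r5)) <= a * (12 * S * r5)) by (rewrite abs_uw by nra; unfold a; lra).
    apply absb in H1. assert (a * (12 * S * r5) <= 27 * a * S * S) by nra. split; nra. }
  assert (Hu2 : u * u = a * a) by (unfold a; rewrite <- Rabs_mult; symmetry; apply Rabs_pos_eq; nra).
  assert (T4 : 0 <= 36 * u * u * S * r5 <= a * S * S).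
  { replace (36 * u * u * S * r5) with (36 * (u * u) * (S * r5)) by ring. rewrite Hu2.
    assert (Haa : a * a <= a * (S / 10000)) by nra.
    assert (0 <= S * r5) by nra.
    assert (a * a * (S * r5) <= a * (S / 10000) * (S * r5)) by (apply Rmult_le_compat_r; auto).
    assert (a * (S / 10000) * (S * r5) <= a * S * S / 36).
    { replace (a * (S / 10000) * (S * r5)) with ((a * S * S) * (r5 / 10000)) by field.
      assert (0 <= a * S * S) by (apply Rmult_le_pos; nra). nra. }
    split. nra. nra. }
  assert (T5 : -34 * a * S * S <= 120 * c0 * u * S <= 34 * a * S * S).
  { assert (Rabs (u * (120 * c0 * S)) <= a * (120 * c0 * S)) by (rewrite abs_uw by nra; unfold a; lra).
    apply absb in H1. assert (a * (120 * c0 * S) <= 34 * a * S * S) by nra. split; nra. }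
  assert (T6 : 0 <= 120 * u * u <= a * S * S).
  { rewrite Rmult_assoc, Hu2. assert (Haa : a * a <= a * (S / 10000)) by nra.
    assert (0 <= a * S) by nra.
    assert (a * (S / 10000) <= a * S * S / 120) by nra.
    split; nra. }
  assert (T7 : - a * S * S <= 120 * u * u * u <= a * S * S).
  { assert (Rabs (u * (120 * u * u)) <= a * (120 * u * u)) by (rewrite abs_uw by nra; unfold a; lra).
    apply absb in H1. rewrite Rmult_assoc, Hu2 in H1.
    assert (Haa : a * a <= (S / 10000) * (S / 10000)) by (apply Rmult_le_compat; lra).
    assert (120 * (a * a) <= S * S) by nra.
    assert (a * (120 * (a * a)) <= a * (S * S)) by (apply Rmult_le_compat_l; lra).
    replace (120 * u * u * u) with (u * (120 * u * u)) by ring. split; nra. }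
  apply Rabs_le. split; nra.
Qed.

Lemma sqrt_diff : forall X Y, 0 <= X -> 0 < Y -> Rabs (sqrt X - sqrt Y) <= Rabs (X - Y) / sqrt Y.
Proof.
  intros X Y HX HY.
  assert (HsY : 0 < sqrt Y) by (apply sqrt_lt_R0; auto).
  assert (HsX : 0 <= sqrt X) by apply sqrt_pos.
  assert (E : sqrt X - sqrt Y = (X - Y) / (sqrt X + sqrt Y)).
  { rewrite <- (sqrt_sqrt X) at 2 by auto. rewrite <- (sqrt_sqrt Y) at 2 by lra. field. lra. }
  rewrite E. unfold Rdiv. rewrite Rabs_mult. rewrite (Rabs_pos_eq (/ (sqrt X + sqrt Y))) by (left; apply Rinv_0_lt_compat; lra).
  apply Rmult_le_compat_l. apply Rabs_pos. apply Rinv_le_contravar; lra.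
Qed.

Lemma sqrt_of_sq : forall p, 0 <= p -> sqrt (p * p) = p.
Proof. intros. apply sqrt_square; auto. Qed.

Lemma muK_id : forall S K u, u = K - c0 * S ->
  / 2 * K * (S + 1 - K) = S * S / 10 + c0 * S / 2 + u * S * r5 / 10 + (u - u * u) / 2.
Proof.
  intros S K u Hu. pose proof r5_sq as H1. pose proof c0_def as H2.
  assert (HK : K = c0 * S + u) by lra. subst K. clear Hu.
  assert (10 * (/ 2 * (c0 * S + u) * (S + 1 - (c0 * S + u))) = 10 * (S * S / 10 + c0 * S / 2 + u * S * r5 / 10 + (u - u * u) / 2)).
  { replace (10 * (/ 2 * (c0 * S + u) * (S + 1 - (c0 * S + u)))) with (5 * ((c0 * S + u) * (S + 1 - (c0 * S + u)))) by field.
    replace (10 * (S * S / 10 + c0 * S / 2 + u * S * r5 / 10 + (u - u * u) / 2)) with (S * S + 5 * c0 * S + u * S * r5 + 5 * u - 5 * u * u) by field.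
    generalize dependent c0. intros c0 H2. generalize dependent r5. intros r H1 H2. nsatz. }
  lra.
Qed.

Lemma div_le_compat : forall x x' y y', 0 <= x <= x' -> 0 < y' <= y -> x / y <= x' / y'.
Proof.
  intros x x' y y' [Hx Hxx] [Hy Hyy]. unfold Rdiv.
  apply Rmult_le_compat; auto. left; apply Rinv_0_lt_compat; lra.
  apply Rinv_le_contravar; lra.
Qed.

Lemma kap_alt : kap = r5 / (10 * s0).
Proof.
  pose proof r5_sq. pose proof r5_pos. pose proof s0_bounds.
  unfold kap. replace 10 with (2 * r5 * r5) by lra. field. lra.
Qed.

Lemma s0_cube : 0.000636 <= s0 * s0 * s0.
Proof. pose proof s0_bounds. assert (0.086 * 0.086 <= s0 * s0) by nra. nra. Qed.

Lemma inv_kap2 : / (kap * kap) <= 0.1525.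
Proof. pose proof kap_bounds. apply (Rmult_le_reg_r (kap * kap)). nra. rewrite Rinv_l by nra. nra. Qed.

Lemma pos3 : forall r, 0 < r -> 0 < r * r * r.
Proof. intros. apply Rmult_lt_0_compat; [apply Rmult_lt_0_compat|]; auto. Qed.

Lemma sq_nonneg : forall x, 0 <= x * x.
Proof. intros; nra. Qed.
Lemma sq_ge1 : forall r, 1 <= r -> 1 <= r * r.
Proof. intros; nra. Qed.

Lemma inv_kap : / kap <= 0.39.
Proof. pose proof kap_bounds. apply (Rmult_le_reg_r kap). lra. rewrite Rinv_l by lra. nra. Qed.
Lemma inv_s0 : / s0 <= 11.7.
Proof. pose proof s0_bounds. apply (Rmult_le_reg_r s0). lra. rewrite Rinv_l by lra. nra. Qed.
Lemma abs_le_sq : forall t, Rabs t <= 1 + t * t.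
Proof. intros. assert (Rabs t * Rabs t = t * t) by (rewrite <- Rabs_mult; apply Rabs_pos_eq; nra).
  pose proof (Rabs_pos t). nra. Qed.

Lemma inv_a : 10 / a_const <= 7.92.
Proof. pose proof a_bounds. apply (Rmult_le_reg_r a_const). lra. unfold Rdiv. rewrite Rmult_assoc, Rinv_l by lra. nra. Qed.
Lemma inv_s0sq : / s0sq <= 135.2.
Proof. pose proof s0sq_bounds. apply (Rmult_le_reg_r s0sq). lra. rewrite Rinv_l by lra. nra. Qed.

Open Scope R_scope.

Lemma fib_SS : forall n, fib (S (S n)) = (fib (S n) + fib n)%nat.
Proof. reflexivity. Qed.

Lemma fib_pos : forall n, (1 <= fib (S n))%nat.
Proof.
  induction n as [n IH] using (well_founded_induction lt_wf).
  destruct n as [|[|n]]; [simpl; lia|simpl; lia|]. rewrite fib_SS. specialize (IH n ltac:(lia)). lia.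
Qed.

Lemma fib_le2 : forall n, (fib (S (S n)) <= 2 * fib (S n))%nat.
Proof.
  intros n. rewrite fib_SS. assert (fib n <= fib (S n))%nat.
  { destruct n as [|m]. simpl; lia. rewrite fib_SS. lia. }
  lia.
Qed.

Definition rho (n : nat) : R := INR (fib n) / INR (fib (S n)).

Lemma fibR_pos : forall n, 1 <= INR (fib (S n)).
Proof. intros. apply (le_INR 1). apply fib_pos. Qed.

Lemma rho_range : forall n, 0 <= rho n <= 1.
Proof.
  intros n. unfold rho. pose proof (fibR_pos n).
  destruct n as [|n]. simpl. unfold Rdiv. rewrite Rmult_0_l. lra.
  rewrite fib_SS, plus_INR. pose proof (pos_INR (fib n)). pose proof (fibR_pos n).
  split. apply Rmult_le_pos; [lra|left; apply Rinv_0_lt_compat; lra].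
  apply (Rmult_le_reg_r (INR (fib (S n)) + INR (fib n))). lra.
  unfold Rdiv. rewrite Rmult_assoc, Rinv_l by lra. lra.
Qed.

Lemma rho_half : forall n, /2 <= rho (S n).
Proof.
  intros n. unfold rho. pose proof (fibR_pos (S n)). pose proof (le_INR _ _ (fib_le2 n)).
  rewrite mult_INR in H0. replace (INR 2) with 2 in H0 by (simpl; lra).
  apply (Rmult_le_reg_r (INR (fib (S (S n))))). lra.
  unfold Rdiv. rewrite Rmult_assoc, Rinv_l by lra. lra.
Qed.

Lemma rho_rec : forall n, rho (S n) = / (1 + rho n).
Proof.
  intros n. unfold rho. rewrite fib_SS, plus_INR. pose proof (fibR_pos n). pose proof (pos_INR (fib n)).
  field. lra.
Qed.

Definition gg : R := (r5 - 1) / 2.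
Lemma gg_eq : gg * gg + gg = 1.
Proof. unfold gg. pose proof r5_sq. nra. Qed.
Lemma gg_bounds : 0.618 < gg < 0.61805.
Proof. unfold gg. pose proof r5_bounds. lra. Qed.

Lemma aux_sq : forall m, 2 <= m -> 8 / m ^ 2 * (21/50) <= 8 / (m + 1) ^ 2.
Proof.
  intros m Hm. assert (0 < m ^ 2) by nra. assert (0 < (m + 1) ^ 2) by nra.
  apply (Rmult_le_reg_r (m ^ 2 * (m + 1) ^ 2)). nra.
  replace (8 / m ^ 2 * (21 / 50) * (m ^ 2 * (m + 1) ^ 2)) with (8 * (21/50) * (m + 1) ^ 2) by (field; lra).
  replace (8 / (m + 1) ^ 2 * (m ^ 2 * (m + 1) ^ 2)) with (8 * m ^ 2) by (field; lra).
  nra.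
Qed.

Lemma rho_err : forall n, Rabs (rho (S n) - gg) <= 8 / (INR (S n) + 1) ^ 2.
Proof.
  induction n as [|n IH].
  - unfold rho. simpl. pose proof gg_bounds. rewrite Rabs_pos_eq; [|lra]. lra.
  - rewrite rho_rec. pose proof (rho_half n) as Hh. pose proof (rho_range (S n)). pose proof gg_bounds as Hg.
    pose proof gg_eq as He.
    assert (Hgi : gg = / (1 + gg)).
    { apply (Rmult_eq_reg_r (1 + gg)); [|lra]. rewrite Rinv_l by lra. lra. }
    set (rr := rho (S n)) in *.
    assert (E : / (1 + rr) - / (1 + gg) = (gg - rr) / ((1 + rr) * (1 + gg))) by (field; lra).
    rewrite Hgi at 1. rewrite E. unfold Rdiv. rewrite Rabs_mult.
    rewrite (Rabs_pos_eq (/ ((1 + rr) * (1 + gg)))) by (left; apply Rinv_0_lt_compat; nra).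
    rewrite Rabs_minus_sym.
    assert (Hi : / ((1 + rr) * (1 + gg)) <= (21/50)).
    { apply (Rmult_le_reg_r ((1 + rr) * (1 + gg))). nra. rewrite Rinv_l by nra. nra. }
    assert (Hn : 0 <= INR n) by apply pos_INR.
    rewrite S_INR in *. rewrite S_INR.
    eapply Rle_trans. apply Rmult_le_compat. apply Rabs_pos. left; apply Rinv_0_lt_compat; nra. apply IH. apply Hi.
    apply aux_sq. lra.
Qed.

Definition p1f (S : R) := 7/50*S + 1/10*S^2.
Definition q1f (S : R) := -3/25 - 3/25*S.
Definition p2f (S : R) := 13/375*S + 1/20*S^2 + 1/30*S^3 + 1/100*S^4.
Definition q2f (S : R) := -3/125 - 19/375*S - 1/25*S^2 - 1/75*S^3.

Lemma mu_formula : forall s, mu s = p1f (INR s) + q1f (INR s) * rho s.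
Proof.
  intros s. rewrite mu_Dl. fold (SZ1 s). fold (Dl s).
  change (INR (length (Dl s))) with (SA s).
  destruct (Pst_all s) as [HA [_ [_ [HZ1 _]]]]. rewrite HA, HZ1.
  unfold cA, cZ1, p1f, q1f, rho. cbv zeta. pose proof (fibR_pos s). field. lra.
Qed.

Lemma sumR_nonneg : forall (A : Type) (g : A -> R) L, (forall x, 0 <= g x) -> 0 <= sumR (map g L).
Proof. intros. induction L; simpl; [lra|]. specialize (H a). unfold sumR in *. simpl. lra. Qed.

Lemma sigma2_nonneg : forall s, 0 <= sigma2 s.
Proof.
  intros s. unfold sigma2. apply Rmult_le_pos. apply sumR_nonneg. intros; apply pow2_ge_0.
  left. apply Rinv_0_lt_compat. rewrite (Permutation.Permutation_length (dcores_perm s)).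
  change (INR (length (Dl s))) with (SA s). destruct (Pst_all s) as [HA _]. rewrite HA. unfold cA.
  pose proof (fibR_pos s). lra.
Qed.

Lemma sigma2_formula : forall s, sigma2 s = p2f (INR s) + q2f (INR s) * rho s - mu s ^ 2.
Proof.
  intros s. rewrite sigma2_Dl.
  rewrite (sumR_ext _ _ (fun l => mu s ^ 2 + 0 * ml l + 0 * ml l ^ 2 + (- 2 * mu s) * psize l + 1 * psize l ^ 2 + 0 * (ml l * psize l)))
    by (intros; ring).
  rewrite sumR_lin. fold (SA s) (SM1 s) (SM2 s) (SZ1 s) (SZ2 s) (SX s).
  change (INR (length (Dl s))) with (SA s).
  assert (Hmu : mu s = SZ1 s / SA s) by (rewrite mu_Dl; reflexivity).
  destruct (Pst_all s) as [HA [_ [_ [HZ1 [HZ2 _]]]]].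
  assert (HApos : 0 < SA s) by (rewrite HA; unfold cA; pose proof (fibR_pos s); lra).
  assert (E : (mu s ^ 2 * SA s + 0 * SM1 s + 0 * SM2 s + - 2 * mu s * SZ1 s + 1 * SZ2 s + 0 * SX s) / SA s
              = SZ2 s / SA s - mu s ^ 2).
  { rewrite Hmu. field. lra. }
  rewrite E. rewrite HA, HZ2. unfold cA, cZ2, p2f, q2f, rho. cbv zeta. pose proof (fibR_pos s). field. lra.
Qed.

Lemma E1_bound : forall S rr, 1 <= S -> 0 <= rr <= 1 ->
  Rabs (p1f S + q1f S * rr - (S * S / 10 + c0 * S / 2)) <= S.
Proof.
  intros S rr HS Hr. pose proof c0_bounds. unfold p1f, q1f.
  assert (0 <= (1 + S) * rr <= 1 + S) by (split; nra).
  apply Rabs_le. split; nra.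
Qed.

Lemma s0sq_alt : 8 / 5 * s0sq = 2 * (2 * gg + 1) / 375.
Proof.
  pose proof s0sq_def. pose proof r5_sq. pose proof r5_pos. unfold gg.
  replace (2 * ((r5 - 1) / 2) + 1) with r5 by field.
  assert (s0sq = r5 / 300).
  { apply (Rmult_eq_reg_r (60 * r5)). rewrite H. replace (r5 / 300 * (60 * r5)) with (r5 * r5 / 5) by field. lra. nra. }
  rewrite H2. field.
Qed.

Lemma E2_id : forall S rr,
  let e := rr - gg in
  p2f S + q2f S * rr - (p1f S + q1f S * rr) ^ 2 - 8 / 5 * s0sq * S * S * S =
  ((-9/625 - 6/625*gg) + (11/1875 + 22/1875*gg)*S + (2/125 + 4/125*gg)*S^2)
  + e * (q2f S - 2 * q1f S * (p1f S + gg * q1f S)) - e * e * (q1f S * q1f S).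
Proof.
  intros S rr e. rewrite (Rmult_assoc (8/5 * s0sq)), (Rmult_assoc (8/5 * s0sq)). rewrite s0sq_alt.
  pose proof gg_eq.
  assert (D : forall X Y Z, X - Y = Z -> Z = 0 -> X = Y) by (intros; lra).
  eapply D. 2: { instantiate (1 := - (gg * gg + gg - 1) * (q1f S * q1f S)). rewrite H. ring. }
  unfold e, p1f, q1f, p2f, q2f. field.
Qed.

Lemma E2_bound : forall S rr, 100 <= S -> 0 <= rr <= 1 -> Rabs (rr - gg) <= 8 / S ^ 2 ->
  Rabs (p2f S + q2f S * rr - (p1f S + q1f S * rr) ^ 2 - 8 / 5 * s0sq * S * S * S) <= 10 * S * S.
Proof.
  intros S rr HS Hr He. rewrite E2_id. pose proof gg_bounds.
  set (e := rr - gg) in *.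
  assert (HS2 : 0 < S ^ 2) by nra.
  assert (He1 : Rabs e * S ^ 2 <= 8).
  { apply (Rmult_le_compat_r (S ^ 2)) in He; [|lra]. unfold Rdiv in He. rewrite Rmult_assoc, Rinv_l in He; lra. }
  assert (Hea : Rabs e <= 1) by nra.
  set (B := (-9/625 - 6/625*gg) + (11/1875 + 22/1875*gg)*S + (2/125 + 4/125*gg)*S^2).
  assert (HB : Rabs B <= S * S).
  { unfold B. assert (0 <= gg * S <= S) by (split; nra). assert (0 <= gg * S ^ 2 <= S ^ 2) by (split; nra).
    apply Rabs_le. split; nra. }
  set (W := q2f S - 2 * q1f S * (p1f S + gg * q1f S)).
  assert (HW : Rabs W <= S ^ 3).
  { unfold W, q2f, q1f, p1f.
    assert (0 <= gg * S <= S) by (split; nra). assert (0 <= gg * S ^ 2 <= S ^ 2) by (split; nra).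
    assert (0 <= gg * S ^ 3 <= S ^ 3) by (split; nra).
    assert (S <= S ^ 2) by nra. assert (S ^ 2 <= S ^ 3) by nra. assert (1 <= S) by lra.
    apply Rabs_le. split; nra. }
  assert (HeW : Rabs (e * W) <= 8 * S).
  { rewrite Rabs_mult. assert (Rabs e * Rabs W <= Rabs e * S ^ 3) by (apply Rmult_le_compat_l; [apply Rabs_pos|auto]).
    assert (Rabs e * S ^ 3 = (Rabs e * S ^ 2) * S) by ring. nra. }
  assert (Hq : Rabs (e * e * (q1f S * q1f S)) <= S * S).
  { rewrite !Rabs_mult. unfold q1f.
    assert (Rabs (-3/25 - 3/25*S) <= S) by (apply Rabs_le; split; lra).
    assert (0 <= Rabs e) by apply Rabs_pos. assert (0 <= Rabs (-3/25 - 3/25*S)) by apply Rabs_pos.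
    assert (Rabs (-3/25 - 3/25*S) * Rabs (-3/25 - 3/25*S) <= S * S) by (apply Rmult_le_compat; lra).
    assert (Rabs e * Rabs e <= 1) by nra. nra. }
  unfold Rminus at 1. eapply Rle_trans. apply Rabs_triang. rewrite Rabs_Ropp.
  eapply Rle_trans. apply Rplus_le_compat_r. apply Rabs_triang. fold B. nra.
Qed.

Open Scope R_scope.

Lemma core_est : forall S r K k0 mu sig2 x,
  1e8 <= r -> S = r * r -> (K - c0 * S) ^ 2 <= r * r * r -> c0 * S - 1 < k0 <= c0 * S ->
  Rabs (mu - (S * S / 10 + c0 * S / 2)) <= S -> 0 <= sig2 ->
  Rabs (sig2 - 8 / 5 * s0sq * S * S * S) <= 10 * S * S ->
  Rabs (Phi (/ sqrt (/ 12 * K * (S + 1 - K) * (S - 2 * K)) * ((mu - / 2 * K * (S + 1 - K)) + x * sqrt sig2))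
        - Phi (a_const * x + - (kap * (K - k0) / r)))
  <= 100000 * (1 + (kap * (K - k0) / r) ^ 2) / r.
Proof.
  intros S r K k0 mu sig2 x Hr HS Hu2 Hk0 HE1 Hsig HE2.
  pose proof r5_bounds as Hr5. pose proof c0_bounds as Hc0. pose proof s0_bounds as Hs0.
  pose proof s0sq_bounds as Hs0sq. pose proof kap_bounds as Hkap. pose proof a_bounds as Ha.
  pose proof s0_sq as Hs0e. pose proof a_sq as Hae.
  set (u := K - c0 * S).
  set (th := c0 * S - k0).
  assert (Hth : 0 <= th < 1) by (unfold th; lra).
  set (tt := kap * (K - k0) / r).
  assert (HKk : K - k0 = u + th) by (unfold u, th; ring).
  assert (Hrp : 0 < r) by lra.
  assert (HS1 : 1e16 <= S) by (rewrite HS; nra).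
  assert (Hua : Rabs u <= S / 10000).
  { assert (u * u <= (S / 10000) * (S / 10000)).
    { replace (u * u) with (u ^ 2) by ring. eapply Rle_trans; [apply Hu2|]. rewrite HS.
      assert (r * r * r * 1e8 <= r * r * r * r) by (apply Rmult_le_compat_l; nra). nra. }
    apply Rabs_le. split; nra. }
  set (a := Rabs u) in *.
  assert (Ha0 : 0 <= a) by apply Rabs_pos.
  assert (Hu_sq : u * u = a * a) by (unfold a; rewrite <- Rabs_mult; symmetry; apply Rabs_pos_eq; nra).
  assert (Htt : u + th = tt * r / kap) by (unfold tt; rewrite HKk; field; lra).
  assert (Hau : a <= Rabs tt * r / kap + 1).
  { unfold a. replace u with (tt * r / kap - th) by lra.
    eapply Rle_trans. apply Rabs_triang. rewrite Rabs_Ropp, (Rabs_pos_eq th) by lra.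
    unfold Rdiv. rewrite !Rabs_mult. rewrite (Rabs_pos_eq r) by lra.
    rewrite (Rabs_pos_eq (/ kap)) by (left; apply Rinv_0_lt_compat; lra). lra. }
  assert (Hau2 : a * a <= 2 * (tt * tt) * S / (kap * kap) + 2).
  { rewrite <- Hu_sq. replace u with ((u + th) - th) by ring. rewrite Htt.
    assert (((tt * r / kap - th) * (tt * r / kap - th)) <= 2 * ((tt * r / kap) * (tt * r / kap)) + 2 * (th * th)).
    { pose proof (pow2_ge_0 (tt * r / kap + th)). nra. }
    assert ((tt * r / kap) * (tt * r / kap) = tt * tt * S / (kap * kap)) by (rewrite HS; field; lra).
    nra. }
  set (gK := / 12 * K * (S + 1 - K) * (S - 2 * K)).
  set (P := s0sq * S * S * S).
  assert (HE3 : Rabs (gK - P) <= (1 + a) * S * S / 8) by (apply (E3_bound S K u); auto; lra).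
  set (p := s0 * r * r * r).
  assert (Hp : 0 < p) by (unfold p; apply Rmult_lt_0_compat; [apply Rmult_lt_0_compat; [apply Rmult_lt_0_compat|]|]; lra).
  assert (HpP : p * p = P) by (unfold p, P; rewrite HS, <- Hs0e; ring).
  assert (HP0 : 0.0074 * (S * S * S) <= P) by (unfold P; assert (0 <= S * S * S) by (apply Rmult_le_pos; nra); nra).
  assert (HE3b : Rabs (gK - P) <= P / 4).
  { eapply Rle_trans; [apply HE3|].
    assert ((1 + a) * S * S / 8 <= (1 + S / 10000) * S * S / 8).
    { unfold Rdiv. apply Rmult_le_compat_r; [lra|]. apply Rmult_le_compat_r; [nra|]. apply Rmult_le_compat_r; [nra|]. lra. }
    assert ((1 + S / 10000) * S * S / 8 <= 0.0074 * (S * S * S) / 4).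
    { assert (0 <= S * S) by nra. nra. }
    lra. }
  assert (HPpos : 0 < P) by (rewrite <- HpP; nra).
  assert (HgK : P * 3 / 4 <= gK) by (apply absb in HE3b; lra).
  set (sk := sqrt gK).
  assert (Hsk_sq : sk * sk = gK) by (unfold sk; apply sqrt_sqrt; lra).
  assert (Hsk0 : 0 <= sk) by (unfold sk; apply sqrt_pos).
  assert (Hsk : p / 2 <= sk).
  { assert ((p / 2) * (p / 2) <= sk * sk) by nra. nra. }
  assert (Hsqp : sqrt P = p) by (rewrite <- HpP; apply sqrt_of_sq; lra).
  assert (Hskp : Rabs (sk - p) <= Rabs (gK - P) / p).
  { rewrite <- Hsqp. unfold sk. apply sqrt_diff; nra. }
  set (N := mu - / 2 * K * (S + 1 - K)).
  set (E1 := mu - (S * S / 10 + c0 * S / 2)) in *.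
  assert (HN : N = E1 - u * S * r5 / 10 - (u - u * u) / 2) by (unfold N, E1; rewrite (muK_id S K u); [ring|reflexivity]).
  assert (Haa : a * a <= a * (S / 10000)) by (apply Rmult_le_compat_l; lra).
  assert (HNb : Rabs N <= S * (1 + a)).
  { rewrite HN. 
    assert (Rabs (u * S * r5 / 10) <= a * S * 0.23).
    { replace (u * S * r5 / 10) with (u * (S * r5 / 10)) by field. rewrite abs_uw by nra. fold a.
      assert (S * r5 / 10 <= S * 0.23) by nra.
      assert (a * (S * r5 / 10) <= a * (S * 0.23)) by (apply Rmult_le_compat_l; lra). lra. }
    assert (Rabs ((u - u * u) / 2) <= a / 2 + a * a / 2).
    { unfold Rdiv. rewrite Rabs_mult, (Rabs_pos_eq (/2)) by lra. 
      eapply Rle_trans. apply Rmult_le_compat_r. lra. unfold Rminus. apply Rabs_triang.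
      rewrite Rabs_Ropp, Rabs_mult. fold a. lra. }
    eapply Rle_trans. unfold Rminus. apply Rabs_triang. rewrite Rabs_Ropp.
    eapply Rle_trans. apply Rplus_le_compat_r. apply Rabs_triang. rewrite Rabs_Ropp.
    replace (u + - (u * u)) with (u - u * u) by ring. nra. }
  set (E1' := E1 - (u - u * u) / 2).
  assert (HE1' : Rabs E1' <= S + a / 2 + a * a / 2).
  { unfold E1'. unfold Rminus at 1. eapply Rle_trans. apply Rabs_triang. rewrite Rabs_Ropp.
    unfold Rdiv. rewrite Rabs_mult, (Rabs_pos_eq (/2)) by lra.
    assert (Rabs (u - u * u) <= a + a * a).
    { unfold Rminus. eapply Rle_trans. apply Rabs_triang. rewrite Rabs_Ropp, Rabs_mult. fold a. lra. }
    lra. }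
  assert (HT1id : N / sk + tt = N * (/ sk - / p) + E1' / p + kap * th / r).
  { assert (tt = kap * u / r + kap * th / r) by (unfold tt; rewrite HKk; field; lra).
    rewrite H. unfold E1'. rewrite HN. rewrite kap_alt. rewrite HS. unfold p. field.
    repeat split; lra. }
  set (w := (1 + tt * tt) / r).
  assert (Hw : 0 <= 1 + tt * tt) by (pose proof (sq_nonneg tt); lra).
  assert (Hr1 : 1 <= r) by lra.
  assert (Hskpos : 0 < sk) by lra.
  assert (Htr : Rabs tt * Rabs tt = tt * tt) by (rewrite <- Rabs_mult; apply Rabs_pos_eq; nra).
  assert (Hta : 0 <= Rabs tt) by apply Rabs_pos.
  assert (HA1 : Rabs N * Rabs (/ sk - / p) <= 2400 * w).
  { assert (Hinv : / sk - / p = (p - sk) / (sk * p)) by (field; lra).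
    rewrite Hinv. unfold Rdiv at 1. rewrite Rabs_mult.
    rewrite (Rabs_pos_eq (/ (sk * p))) by (left; apply Rinv_0_lt_compat; nra).
    assert (Hps : Rabs (p - sk) <= (1 + a) * S * S / 8 / p).
    { rewrite Rabs_minus_sym. eapply Rle_trans; [apply Hskp|]. unfold Rdiv. apply Rmult_le_compat_r.
      left; apply Rinv_0_lt_compat; lra. apply HE3. }
    assert (Hq : Rabs (p - sk) * / (sk * p) <= ((1 + a) * S * S / 8 / p) / (p / 2 * p)).
    { apply div_le_compat. split; [apply Rabs_pos|auto]. split. nra. apply Rmult_le_compat_r; lra. }
    assert (HNq : Rabs N * (Rabs (p - sk) * / (sk * p)) <= S * (1 + a) * (((1 + a) * S * S / 8 / p) / (p / 2 * p))).
    { apply Rmult_le_compat; auto. apply Rabs_pos. apply Rmult_le_pos. apply Rabs_pos. left; apply Rinv_0_lt_compat; nra. }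
    assert (Heq : S * (1 + a) * (((1 + a) * S * S / 8 / p) / (p / 2 * p)) = ((1 + a) * (1 + a)) / (4 * (s0 * s0 * s0) * (r * r * r))).
    { unfold p. rewrite HS. field. split; lra. }
    rewrite Heq in HNq.
    assert (H1a : (1 + a) * (1 + a) <= 6 + 4 * (tt * tt) * (r * r) / (kap * kap)).
    { rewrite HS in Hau2. pose proof (pow2_ge_0 (a - 1)). lra. }
    pose proof s0_cube as Hs03.
    assert (Hden : 0 < 4 * (s0 * s0 * s0) * (r * r * r)) by (apply Rmult_lt_0_compat; [lra|apply pos3; lra]).
    eapply Rle_trans; [exact HNq|]. unfold w.
    apply (Rmult_le_reg_r (4 * (s0 * s0 * s0) * (r * r * r))); auto.
    unfold Rdiv. rewrite Rmult_assoc, Rinv_l by lra.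
    replace (2400 * ((1 + tt * tt) * / r) * (4 * (s0 * s0 * s0) * (r * r * r))) with (9600 * (s0 * s0 * s0) * (r * r) * (1 + tt * tt)) by (field; lra).
    assert (4 * (tt * tt) * (r * r) / (kap * kap) <= 0.61 * (tt * tt) * (r * r)).
    { unfold Rdiv. pose proof inv_kap2.
      assert (0 <= (tt * tt) * (r * r)) by (apply Rmult_le_pos; apply sq_nonneg).
      replace (4 * (tt * tt) * (r * r) * / (kap * kap)) with (4 * ((tt * tt) * (r * r)) * / (kap * kap)) by ring.
      assert (((tt * tt) * (r * r)) * / (kap * kap) <= ((tt * tt) * (r * r)) * 0.1525) by (apply Rmult_le_compat_l; auto).
      lra. }
    assert (9600 * (s0 * s0 * s0) * (r * r) * (1 + tt * tt) >= 6.1 * (r * r) * (1 + tt * tt)).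
    { assert (0 <= (r * r) * (1 + tt * tt)) by (apply Rmult_le_pos; [apply sq_nonneg|lra]).
      replace (9600 * (s0 * s0 * s0) * (r * r) * (1 + tt * tt)) with ((9600 * (s0 * s0 * s0)) * ((r * r) * (1 + tt * tt))) by ring.
      assert (6.1 <= 9600 * (s0 * s0 * s0)) by lra.
      assert (6.1 * ((r * r) * (1 + tt * tt)) <= (9600 * (s0 * s0 * s0)) * ((r * r) * (1 + tt * tt))) by (apply Rmult_le_compat_r; auto).
      lra. }
    assert (1 <= r * r) by (apply sq_ge1; lra).
    assert (0 <= (tt * tt) * (r * r)) by (apply Rmult_le_pos; apply sq_nonneg).
    lra. }
  assert (Hb1 : a <= 0.39 * Rabs tt * r + 1).
  { pose proof inv_kap. unfold Rdiv in Hau. 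
    assert (Rabs tt * r * / kap <= Rabs tt * r * 0.39) by (apply Rmult_le_compat_l; [apply Rmult_le_pos; lra|lra]). lra. }
  assert (Hb2 : a * a <= 0.31 * (tt * tt) * (r * r) + 2).
  { pose proof inv_kap2. unfold Rdiv in Hau2. rewrite HS in Hau2.
    assert (2 * (tt * tt) * (r * r) * / (kap * kap) <= 2 * (tt * tt) * (r * r) * 0.1525).
    { apply Rmult_le_compat_l; auto. apply Rmult_le_pos; [|apply sq_nonneg]. pose proof (sq_nonneg tt); lra. }
    assert (0 <= (tt * tt) * (r * r)) by (apply Rmult_le_pos; apply sq_nonneg). lra. }
  assert (Hw0 : 0 <= w) by (unfold w; apply Rmult_le_pos; [lra|left; apply Rinv_0_lt_compat; lra]).
  assert (Htr1 : Rabs tt * r <= (1 + tt * tt) * (r * r)).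
  { apply Rmult_le_compat; auto. lra. apply abs_le_sq. assert (1 * r <= r * r) by (apply Rmult_le_compat_r; lra). lra. }
  assert (Hrr : 1 <= r * r) by (apply sq_ge1; lra).
  assert (Httrr : 0 <= (tt * tt) * (r * r)) by (apply Rmult_le_pos; apply sq_nonneg).
  assert (HA2 : Rabs (E1' / p) <= 36 * w).
  { unfold Rdiv. rewrite Rabs_mult, (Rabs_pos_eq (/ p)) by (left; apply Rinv_0_lt_compat; lra).
    assert (Hnum : Rabs E1' <= 3 * (r * r) * (1 + tt * tt)).
    { eapply Rle_trans; [apply HE1'|]. rewrite HS. lra. }
    assert (Rabs E1' * / p <= 3 * (r * r) * (1 + tt * tt) * / p) by (apply Rmult_le_compat_r; [left; apply Rinv_0_lt_compat; lra|auto]).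
    assert (E : 3 * (r * r) * (1 + tt * tt) * / p = 3 * / s0 * w) by (unfold w, p; field; split; lra).
    pose proof inv_s0. 
    assert (3 * / s0 * w <= 3 * 11.7 * w) by (apply Rmult_le_compat_r; [unfold w; apply Rmult_le_pos; [lra|left; apply Rinv_0_lt_compat; lra]|lra]).
    lra. }
  assert (HA3 : Rabs (kap * th / r) <= 3 * w).
  { rewrite Rabs_pos_eq by (apply Rmult_le_pos; [apply Rmult_le_pos; lra|left; apply Rinv_0_lt_compat; lra]).
    unfold w, Rdiv. replace (3 * ((1 + tt * tt) * / r)) with ((3 * (1 + tt * tt)) * / r) by ring.
    apply Rmult_le_compat_r. left; apply Rinv_0_lt_compat; lra.
    pose proof (sq_nonneg tt). assert (kap * th <= 2.61 * 1) by (apply Rmult_le_compat; lra). lra. }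
  assert (HT1 : Rabs (N / sk + tt) <= 2500 * w).
  { rewrite HT1id. eapply Rle_trans. apply Rabs_triang. eapply Rle_trans. apply Rplus_le_compat_r. apply Rabs_triang.
    rewrite Rabs_mult. assert (0 <= w) by (unfold w; apply Rmult_le_pos; [lra|left; apply Rinv_0_lt_compat; lra]). lra. }
  set (Y := 8 / 5 * s0sq * S * S * S) in *.
  set (ac := a_const) in *.
  assert (HacP : ac * p * (ac * p) = Y) by (replace (ac * p * (ac * p)) with ((ac * ac) * (p * p)) by ring; rewrite HpP, Hae; unfold Y, P; ring).
  assert (Hacp : 0 < ac * p) by (apply Rmult_lt_0_compat; lra).
  assert (HsqY : sqrt Y = ac * p) by (rewrite <- HacP; apply sqrt_of_sq; lra).
  assert (HYpos : 0 < Y) by (rewrite <- HacP; apply Rmult_lt_0_compat; lra).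
  assert (Hsa : Rabs (sqrt sig2 - ac * p) <= 10 * S * S / (ac * p)).
  { rewrite <- HsqY. eapply Rle_trans. apply sqrt_diff; auto. rewrite HsqY.
    apply Rmult_le_compat_r. left; apply Rinv_0_lt_compat; lra. auto. }
  assert (Hsb : Rabs (ac * sk - ac * p) <= ac * ((1 + a) * S * S / 8 / p)).
  { replace (ac * sk - ac * p) with (ac * (sk - p)) by ring. rewrite Rabs_mult, (Rabs_pos_eq ac) by lra.
    apply Rmult_le_compat_l. lra. eapply Rle_trans; [apply Hskp|]. unfold Rdiv.
    apply Rmult_le_compat_r. left; apply Rinv_0_lt_compat; lra. apply HE3. }
  set (R := sqrt sig2 / sk).
  assert (HRa : Rabs (R - ac) <= (2200 + 44 * a) / S).
  { assert (E : R - ac = (sqrt sig2 - ac * sk) / sk) by (unfold R; field; lra).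
    rewrite E. unfold Rdiv at 1. rewrite Rabs_mult, (Rabs_pos_eq (/ sk)) by (left; apply Rinv_0_lt_compat; lra).
    assert (H1 : Rabs (sqrt sig2 - ac * sk) <= 10 * S * S / (ac * p) + ac * ((1 + a) * S * S / 8 / p)).
    { replace (sqrt sig2 - ac * sk) with ((sqrt sig2 - ac * p) - (ac * sk - ac * p)) by ring.
      unfold Rminus at 1. eapply Rle_trans. apply Rabs_triang. rewrite Rabs_Ropp. lra. }
    assert (H2 : Rabs (sqrt sig2 - ac * sk) * / sk <= (10 * S * S / (ac * p) + ac * ((1 + a) * S * S / 8 / p)) / (p / 2)).
    { apply div_le_compat. split; auto. apply Rabs_pos. lra. }
    eapply Rle_trans; [exact H2|].
    assert (E2 : (10 * S * S / (ac * p) + ac * ((1 + a) * S * S / 8 / p)) / (p / 2)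
                 = (2 * (10 / ac) + ac / 4 * (1 + a)) * / s0sq / S).
    { rewrite <- Hs0e. unfold p. rewrite HS. field. repeat split; lra. }
    rewrite E2. pose proof inv_a as Hia. fold ac in Hia. pose proof inv_s0sq.
    assert (Hc1 : 0 <= 2 * (10 / ac) + ac / 4 * (1 + a)).
    { assert (0 <= 10 / ac) by (unfold Rdiv; apply Rmult_le_pos; [lra|left; apply Rinv_0_lt_compat; lra]).
      assert (0 <= ac / 4 * (1 + a)) by (apply Rmult_le_pos; lra). lra. }
    assert (Hc2 : 2 * (10 / ac) + ac / 4 * (1 + a) <= 15.84 + 0.32 * (1 + a)).
    { assert (ac / 4 * (1 + a) <= 0.32 * (1 + a)) by (apply Rmult_le_compat_r; lra). lra. }
    unfold Rdiv. apply Rmult_le_compat_r. left; apply Rinv_0_lt_compat; lra.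
    assert (0 < / s0sq) by (apply Rinv_0_lt_compat; lra).
    assert ((2 * (10 / ac) + ac / 4 * (1 + a)) * / s0sq <= (15.84 + 0.32 * (1 + a)) * 135.2)
      by (apply Rmult_le_compat; lra).
    lra. }
  assert (Hsm : (2200 + 44 * a) / S <= 0.01).
  { apply (Rmult_le_reg_r S). lra. unfold Rdiv. rewrite Rmult_assoc, Rinv_l by lra. lra. }
  assert (HRpos : 1.25 <= R) by (apply absb in HRa; lra).
  assert (Hmin : 1.25 <= Rmin R ac) by (apply Rmin_glb; lra).
  assert (HT2 : Rabs (R - ac) * (1 + Rabs (- tt)) / Rmin R ac <= 3700 * w).
  { rewrite Rabs_Ropp.
    assert (H1 : Rabs (R - ac) * (1 + Rabs tt) <= (2200 + 44 * a) / S * (1 + Rabs tt)) by (apply Rmult_le_compat_r; lra).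
    assert (H2 : (2200 + 44 * a) * (1 + Rabs tt) <= 4600 * r * (1 + tt * tt)).
    { assert (0 <= Rabs tt * r) by (apply Rmult_le_pos; lra).
      assert (H3 : (2200 + 44 * a) * (1 + Rabs tt) <= (2244 + 18 * (Rabs tt * r)) * (1 + Rabs tt)) by (apply Rmult_le_compat_r; lra).
      assert (H4 : (2244 + 18 * (Rabs tt * r)) * (1 + Rabs tt) = 2244 * (1 + Rabs tt) + 18 * r * (Rabs tt + Rabs tt * Rabs tt)) by field.
      rewrite Htr in H4. pose proof (abs_le_sq tt) as Hat.
      assert (H5 : 2244 * (1 + Rabs tt) <= 4488 * r * (1 + tt * tt)).
      { assert (1 + Rabs tt <= 2 * (1 + tt * tt)) by (pose proof (sq_nonneg tt); lra).
        assert (1 * (1 + tt * tt) <= r * (1 + tt * tt)) by (apply Rmult_le_compat_r; lra). lra. }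
      assert (H6 : 18 * r * (Rabs tt + tt * tt) <= 36 * r * (1 + tt * tt)).
      { replace (18 * r * (Rabs tt + tt * tt)) with ((18 * r) * (Rabs tt + tt * tt)) by field.
        replace (36 * r * (1 + tt * tt)) with ((18 * r) * (2 * (1 + tt * tt))) by field.
        apply Rmult_le_compat_l; lra. }
      lra. }
    assert (H7 : (2200 + 44 * a) / S * (1 + Rabs tt) <= 4600 * w).
    { unfold w. rewrite HS. unfold Rdiv.
      apply (Rmult_le_reg_r (r * r)). apply Rmult_lt_0_compat; lra.
      replace ((2200 + 44 * a) * / (r * r) * (1 + Rabs tt) * (r * r)) with ((2200 + 44 * a) * (1 + Rabs tt)) by (field; lra).
      replace (4600 * ((1 + tt * tt) * / r) * (r * r)) with (4600 * r * (1 + tt * tt)) by (field; lra). lra. }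
    apply Rle_trans with ((2200 + 44 * a) / S * (1 + Rabs tt) / 1.25).
    apply div_le_compat; [split; [apply Rmult_le_pos; [apply Rabs_pos|pose proof (Rabs_pos tt); lra]|auto]|lra].
    unfold Rdiv at 1. apply Rle_trans with (4600 * w * / 1.25). apply Rmult_le_compat_r; [lra|auto]. lra. }
  assert (Hy : / sk * (N + x * sqrt sig2) = N / sk + R * x) by (unfold R; field; lra).
  rewrite Hy. replace (ac * x + - tt) with (- tt + ac * x) by ring.
  replace (Phi (N / sk + R * x) - Phi (- tt + ac * x)) with
    ((Phi (N / sk + R * x) - Phi (- tt + R * x)) + (Phi (- tt + R * x) - Phi (- tt + ac * x))) by ring.
  eapply Rle_trans. apply Rabs_triang.
  assert (HP1 : Rabs (Phi (N / sk + R * x) - Phi (- tt + R * x)) <= 1250 * w).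
  { eapply Rle_trans. apply Phi_lip. replace (N / sk + R * x - (- tt + R * x)) with (N / sk + tt) by ring. lra. }
  assert (HP2 : Rabs (Phi (- tt + R * x) - Phi (- tt + ac * x)) <= 3700 * w).
  { eapply Rle_trans. apply PhiX; lra. auto. }
  replace (100000 * (1 + tt ^ 2) / r) with (100000 * w) by (unfold w; simpl; field; lra).
  lra.
Qed.

Open Scope R_scope.

Theorem corollary5 :
  exists C : R, forall (s k : nat) (x : R),
    (0 < s)%nat -> (0 < k)%nat -> (2 * k < s)%nat ->
    Rabs (Phi (y_k s k x) - Phi (y_k_star s k x))
      <= C / sqrt (INR s) * (1 + t_k s k ^ 2).
Proof.
  exists 1e9. intros s k x Hs Hk H2k.
  set (S := INR s). set (r := sqrt S).
  assert (HS1 : 1 <= S) by (unfold S; apply (le_INR 1); lia).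
  assert (Hrp : 0 < r) by (unfold r; apply sqrt_lt_R0; lra).
  assert (HSr : S = r * r) by (unfold r; rewrite sqrt_sqrt; lra).
  set (t := t_k s k).
  assert (Ht2 : 0 <= t ^ 2) by apply pow2_ge_0.
  pose proof (Phi_diff4 (y_k s k x) (y_k_star s k x)) as H4.
  assert (Hcase : r < 1e8 \/ (1e8 <= r /\ r <= 1 + t ^ 2) \/ (1e8 <= r /\ 1 + t ^ 2 < r)) by lra.
  destruct Hcase as [Hc|[[Hc1 Hc2]|[Hc1 Hc2]]].
  - apply Rle_trans with (1e9 / r * 1).
    + assert (10 <= 1e9 / r). { apply (Rmult_le_reg_r r); auto. unfold Rdiv. rewrite Rmult_assoc, Rinv_l by lra. lra. }
      lra.
    + apply Rmult_le_compat_l. unfold Rdiv. apply Rmult_le_pos. lra. left; apply Rinv_0_lt_compat; lra. lra.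
  - apply Rle_trans with (1e9 / r * r).
    + unfold Rdiv. rewrite Rmult_assoc, Rinv_l by lra. lra.
    + apply Rmult_le_compat_l. unfold Rdiv. apply Rmult_le_pos. lra. left; apply Rinv_0_lt_compat; lra. lra.
  - set (K := INR k).
    set (k0r := k0 s).
    assert (Hk0 : c0 * S - 1 < k0r <= c0 * S).
    { unfold k0r, k0. fold S. pose proof (base_Int_part (c0 * S)). lra. }
    assert (Ht : t = qq * (K - k0r) / r) by reflexivity.
    pose proof qq_bounds as Hq. pose proof kap_bounds as Hkap.
    assert (Hz : (K - k0r) * (K - k0r) * (qq * qq) = t * t * (r * r)).
    { rewrite Ht. field. lra. }
    assert (Hz2 : (K - k0r) * (K - k0r) * 11 <= r * r * r).
    { assert (t * t < r) by (simpl in Hc2; lra).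
      assert (t * t * (r * r) <= r * (r * r)) by (apply Rmult_le_compat_r; [apply sq_nonneg|lra]).
      assert (11 <= qq * qq) by nra.
      assert ((K - k0r) * (K - k0r) * 11 <= (K - k0r) * (K - k0r) * (qq * qq)) by (apply Rmult_le_compat_l; [apply sq_nonneg|lra]).
      lra. }
    assert (Hu2 : (K - c0 * S) ^ 2 <= r * r * r).
    { replace (K - c0 * S) with ((K - k0r) - (c0 * S - k0r)) by ring.
      set (z := K - k0r) in *. set (th := c0 * S - k0r).
      assert (0 <= th <= 1) by (unfold th; lra).
      assert ((z - th) ^ 2 <= 2 * (z * z) + 2) by (pose proof (pow2_ge_0 (z + th)); nra).
      assert (4 <= r * r * r) by (assert (1e8 * 1e8 <= r * r) by (apply Rmult_le_compat; lra); nra).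
      lra. }
    assert (HE1 : Rabs (mu s - (S * S / 10 + c0 * S / 2)) <= S).
    { rewrite mu_formula. fold S. apply E1_bound; auto. apply rho_range. }
    assert (HS100 : 100 <= S) by (rewrite HSr; nra).
    assert (Hrho : Rabs (rho s - gg) <= 8 / S ^ 2).
    { destruct s as [|n]; [lia|]. eapply Rle_trans. apply rho_err. fold S.
      apply div_le_compat. lra. split. nra. assert (0 <= S) by lra. nra. }
    assert (HE2 : Rabs (sigma2 s - 8 / 5 * s0sq * S * S * S) <= 10 * S * S).
    { rewrite sigma2_formula. rewrite mu_formula. fold S. apply E2_bound; auto. apply rho_range. }
    pose proof (core_est S r K k0r (mu s) (sigma2 s) x Hc1 HSr Hu2 Hk0 HE1 (sigma2_nonneg s) HE2) as Hc.
    assert (Hyk : y_k s k x = / sqrt (/ 12 * K * (S + 1 - K) * (S - 2 * K)) * ((mu s - / 2 * K * (S + 1 - K)) + x * sqrt (sigma2 s))) by reflexivity.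
    assert (Hys : y_k_star s k x = a_const * x + - (kap * (K - k0r) / r)).
    { unfold y_k_star. fold t. rewrite Ht. unfold b_const. rewrite <- sqrt35_qq. field. lra. }
    rewrite Hyk, Hys. eapply Rle_trans; [exact Hc|].
    assert (Hkt : (kap * (K - k0r) / r) ^ 2 <= t ^ 2).
    { rewrite Ht. simpl. rewrite !Rmult_1_r.
      replace (kap * (K - k0r) / r * (kap * (K - k0r) / r)) with ((kap * kap) * ((K - k0r) / r * ((K - k0r) / r))) by (field; lra).
      replace (qq * (K - k0r) / r * (qq * (K - k0r) / r)) with ((qq * qq) * ((K - k0r) / r * ((K - k0r) / r))) by (field; lra).
      apply Rmult_le_compat_r. apply sq_nonneg. nra. }
    unfold Rdiv. rewrite (Rmult_comm (1e9 * / r)). rewrite <- Rmult_assoc.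
    apply Rmult_le_compat_r. left; apply Rinv_0_lt_compat; lra.
    assert (0 <= (kap * (K - k0r) / r) ^ 2) by apply pow2_ge_0. nra.
Qed.
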